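(* Let $R=\bigoplus_{\alpha\in\Gamma}R_{\alpha}$ be a graded integral domain, let $\star$ be a semistar operation on $R$ such that $R^{\star}\subsetneq R_H$, and let $0\neq f\in R[X]$. Then the following conditions are equivalent: (1) $A_f$ is $\star_f$-invertible; (2) $A_f\,\mathrm{NA}(R,\star)$ is invertible; (3) $A_f\,\mathrm{NA}(R,\star)=f\,\mathrm{NA}(R,\star)$.
   Context: $\Gamma$ is a commutative cancellative monoid (written additively) whose quotient group $\langle\Gamma\rangle$ is torsion-free. A graded integral domain $R=\bigoplus_{\alpha\in\Gamma}R_\alpha$ is an integral domain that is the direct sum of additive subgroups $R_\alpha$ with $R_\alpha R_\beta\subseteq R_{\alpha+\beta}$. $K$ is its quotient field, $H$ the set of nonzero homogeneous elements of $R$, $R_H$ the homogeneous quotient field. For $a\in R$, $C(a)$ is the ideal generated by the homogeneous components of $a$; for $f=f_0+\cdots+f_nX^n\in R[X]$, $A_f:=\sum_i C(f_i)$. A semistar operation on $R$ is a map $\star$ from the set of nonzero $R$-submodules of $K$ to itself such that for all $0\ne x\in K$ and $E,F$: $(xE)^\star=xE^\star$; $E\subseteq F\Rightarrow E^\star\subseteq F^\star$; $E\subseteq E^\star$; $(E^\star)^\star=E^\star$. $\star_f$ is defined by $E^{\star_f}=\bigcup\{F^\star: F\subseteq E, F$ a nonzero finitely generated fractional ideal$\}$. A nonzero fractional ideal $I$ is $\star_f$-invertible if $(I(R:I))^{\star_f}=R^\star$, where $(R:I)=\{x\in K: xI\subseteq R\}$. $N(\star):=\{g\in R[X]: g\ne0,\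 A_g^\star=R^\star\}$ and $\mathrm{NA}(R,\star):=R[X]_{N(\star)}$. *)

(* Defs.v *)
From HB Require Import structures.
From mathcomp Require Import all_boot all_order all_algebra.
From mathcomp Require Import fraction.
Set Implicit Arguments. Unset Strict Implicit. Unset Printing Implicit Defensive.
Import GRing.Theory.
Local Open Scope ring_scope.

(* Elements of <Gamma> are differences a - b,
   and (by cancellativity) n(a - b) = 0 in <Gamma> iff n*a = n*b in Gamma. *)
Definition cancellative (G : nmodType) : Prop :=
  forall a b c : G, a + c = b + c -> a = b.

Definition quotient_group_torsion_free (G : nmodType) : Prop :=
  forall (n : nat) (a b : G), a *+ n.+1 = b *+ n.+1 -> a = b.

Definition grading_monoid (G : nmodType) : Prop :=
  cancellative G /\ quotient_group_torsion_free G.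

Section Sets.
Variable F : fieldType.

Definition span (S : F -> Prop) (T : F -> Prop) : F -> Prop :=
  fun x => exists s : seq (F * F),
    (forall p, p \in s -> S p.1 /\ T p.2) /\
    x = \sum_(p <- s) p.1 * p.2.

Definition prodset (I J : F -> Prop) : F -> Prop :=
  fun z => exists x y, I x /\ J y /\ z = x * y.

Definition mulmod (S I J : F -> Prop) : F -> Prop := span S (prodset I J).

Definition colon (S I : F -> Prop) : F -> Prop :=
  fun x => forall y, I y -> S (x * y).

Definition scaleset (x : F) (E : F -> Prop) : F -> Prop :=
  fun y => exists e, E e /\ y = x * e.

Definition incl (E E' : F -> Prop) : Prop := forall x, E x -> E' x.

Definition sameset (E E' : F -> Prop) : Prop := forall x, E x <-> E' x.

Definition submod (S E : F -> Prop) : Prop :=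
  E 0 /\ (forall x y, E x -> E y -> E (x + y)) /\
  (forall r x, S r -> E x -> E (r * x)).

Definition nz_submod (S E : F -> Prop) : Prop :=
  submod S E /\ exists x, x != 0 /\ E x.

Definition invertible (D I : F -> Prop) : Prop :=
  sameset (mulmod D I (colon D I)) D.

End Sets.

Section Graded.
Variables (G : nmodType) (K : fieldType).

(* R is a subring of the field K and K is the quotient field of R;
   Rg a is the homogeneous piece R_a; R is the internal direct sum of the R_a
   and R_a R_b <= R_(a+b). *)
Definition graded_domain (R : pred K) (Rg : G -> pred K) : Prop :=
  [/\ R 1, (forall x y, R x -> R y -> R (x - y)),
      (forall x y, R x -> R y -> R (x * y))
    & (forall x : K, exists a b, [/\ R a, R b, b != 0 & x = a / b])] /\
  [/\ (forall a, Rg a 0 /\ (forall x y, Rg a x -> Rg a y -> Rg a (x - y))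
              /\ (forall x, Rg a x -> R x)),
   (forall a b x y, Rg a x -> Rg b y -> Rg (a + b) (x * y)),
   (forall r, R r -> exists (s : seq G) (c : G -> K),
        [/\ uniq s, (forall a, a \in s -> Rg a (c a)) & r = \sum_(a <- s) c a])
 & (forall (s : seq G) (c : G -> K), uniq s -> (forall a, a \in s -> Rg a (c a)) ->
        \sum_(a <- s) c a = 0 -> forall a, a \in s -> c a = 0)].

Definition hcomp (Rg : G -> pred K) (r : K) : K -> Prop :=
  fun x => exists (s : seq G) (c : G -> K),
    [/\ uniq s, (forall a, a \in s -> Rg a (c a)), r = \sum_(a <- s) c a
      & exists2 a, a \in s & x = c a].

Definition homog (Rg : G -> pred K) : K -> Prop :=
  fun h => h != 0 /\ exists a, Rg a h.

Definition RH (R : pred K) (Rg : G -> pred K) : K -> Prop :=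
  fun x => exists a h, R a /\ homog Rg h /\ x = a / h.

Definition Cont (R : pred K) (Rg : G -> pred K) (r : K) : K -> Prop :=
  span (fun x => R x) (hcomp Rg r).

Definition inRX (R : pred K) (f : {poly K}) : Prop := forall i, R f`_i.

Definition Af (R : pred K) (Rg : G -> pred K) (f : {poly K}) : K -> Prop :=
  span (fun x => R x) (fun x => exists i, hcomp Rg f`_i x).

End Graded.

Section Semistar.
Variable K : fieldType.
Implicit Types (R : pred K) (st : (K -> Prop) -> (K -> Prop)).

Definition Rset R : K -> Prop := fun x => R x.

(* a map on nonzero R-submodules of K (extended arbitrarily to other sets);
   equalities of submodules are stated extensionally *)
Definition semistar R st : Prop :=
  [/\ (forall E, nz_submod (Rset R) E -> nz_submod (Rset R) (st E)),
      (forall x E, x != 0 -> nz_submod (Rset R) E ->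
         sameset (st (scaleset x E)) (scaleset x (st E))),
      (forall E E', nz_submod (Rset R) E -> nz_submod (Rset R) E' ->
         incl E E' -> incl (st E) (st E')),
      (forall E, nz_submod (Rset R) E -> incl E (st E))
    & (forall E, nz_submod (Rset R) E -> sameset (st (st E)) (st E))].

Definition star_f R st (E : K -> Prop) : K -> Prop :=
  fun x => exists s : seq K,
    let Fs := span (Rset R) (fun y => y \in s) in
    [/\ incl Fs E, (exists y, y != 0 /\ Fs y) & st Fs x].

Definition star_f_invertible R st (I : K -> Prop) : Prop :=
  sameset (star_f R st (mulmod (Rset R) I (colon (Rset R) I))) (st (Rset R)).

Definition Nstar (G : nmodType) R (Rg : G -> pred K) st (g : {poly K}) : Prop :=
  [/\ g != 0, inRX R g & sameset (st (Af R Rg g)) (st (Rset R))].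

Notation "x %:F" := (@FracField.tofrac _ x) : ring_scope.

Definition NA (G : nmodType) R (Rg : G -> pred K) st : {fraction {poly K}} -> Prop :=
  fun z => exists p g, [/\ inRX R p, Nstar R Rg st g & z = p%:F / g%:F].

Definition extNA (G : nmodType) R (Rg : G -> pred K) st (I : K -> Prop)
  : {fraction {poly K}} -> Prop :=
  span (NA R Rg st) (fun z => exists2 a, I a & z = (a%:P)%:F).

Definition fNA (G : nmodType) R (Rg : G -> pred K) st (f : {poly K})
  : {fraction {poly K}} -> Prop :=
  scaleset (f%:F) (NA R Rg st).

End Semistar.

(* Main.v *)
Require Import Defs.
From HB Require Import structures.
From mathcomp Require Import all_boot all_order all_algebra.
From mathcomp Require Import fraction.
From mathcomp Require Import boolp classical_sets ring zify.
From Stdlib Require Import ClassicalEpsilon Classical FunctionalExtensionality PropExtensionality.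
Local Open Scope ring_scope.

Module Helpers.
Set Implicit Arguments. Unset Strict Implicit. Unset Printing Implicit Defensive.
Import GRing.Theory.
Local Notation span := Defs.span.
Local Notation "x %:F" := (@FracField.tofrac _ x).

Local Open Scope classical_set_scope.
Lemma zorn_base (T : Type) (P : (T -> Prop) -> Prop) (b : T -> Prop) :
  P b -> (exists t, b t) ->
  (forall F : (T -> Prop) -> Prop, (forall X, F X -> P X) ->
     (forall X Y, F X -> F Y -> (forall t, X t -> Y t) \/ (forall t, Y t -> X t)) ->
     (exists X, F X) -> P (fun t => exists X, F X /\ X t)) ->
  exists A, P A /\ (forall t, b t -> A t) /\
    (forall B, P B -> (forall t, A t -> B t) -> forall t, B t -> A t).
Proof.
move=> Pb [t0 bt0] hch.
pose P' (B : set T) := B = set0 \/ (P B /\ (forall t, b t -> B t)).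
have [|A [PA Amax]] := @Zorn_bigcup T P'.
  move=> F FP' Ftot.
  case: (classic (exists X, F X /\ X <> set0)) => [[X0 [FX0 X0n]]|hn].
    right.
    have eqU : (\bigcup_(X in F) X) = (fun t => exists X, (F `&` (fun X => X <> set0)) X /\ X t).
      apply/seteqP; split => t.
        move=> [X FX Xt]; exists X; split => //; split => // X0e; by move: Xt; rewrite X0e.
      by move=> [X [[FX _] Xt]]; exists X.
    rewrite eqU; split.
      apply: hch.
      - by move=> X [FX Xn]; case: (FP' X FX) => [/Xn []|[]].
      - move=> X Y [FX _] [FY _]; case: (Ftot X Y FX FY) => h; [left|right] => t; exact: h.
      - by exists X0.
    move=> t bt; exists X0; split => //; case: (FP' X0 FX0) => // [[_ h]]; exact: h.
  left; apply/seteqP; split => t // [X FX Xt].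
  case: hn; exists X; split => // X0e; by move: Xt; rewrite X0e.
case: PA => [A0|[PA bA]].
  exfalso; apply: (Amax b); last by right.
  rewrite A0; split; first by [].
  by move=> /(_ t0 bt0).
exists A; split => //; split => // B PB AB t Bt.
apply: NNPP => At; apply: (Amax B); last by right; split => // t' bt'; apply: AB; apply: bA.
split; first by move=> x; apply: AB.
by move=> /(_ t Bt).
Qed.
Local Close Scope classical_set_scope.

Lemma sum_pred1_uniq (T : eqType) (V : nmodType) (r : seq T) (i : T) (F : T -> V) :
  uniq r -> \sum_(j <- r | j == i) F j = if i \in r then F i else 0.
Proof.
move=> ur; rewrite -big_filter; case: ifP => ir.
  by rewrite filter_pred1_uniq // big_seq1.
rewrite big1_seq // => j; rewrite /= mem_filter => /andP[/eqP ej jr]; by move: ir; rewrite -ej jr.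
Qed.

Section Graded.
Variables (G : nmodType) (K : fieldType) (R : pred K) (Rg : G -> pred K).
Hypothesis HG : grading_monoid G.
Hypothesis HR : graded_domain R Rg.

Lemma canc (a b c : G) : c + a = c + b -> a = b.
Proof. move=> h; case: HG => hc _; apply: (hc _ _ c); by rewrite addrC h addrC. Qed.

Lemma R1 : R 1. Proof. by case: HR => [[]]. Qed.
Lemma RB x y : R x -> R y -> R (x - y). Proof. by case: HR => [[_ h _ _] _]; apply: h. Qed.
Lemma RM x y : R x -> R y -> R (x * y). Proof. by case: HR => [[_ _ h _] _]; apply: h. Qed.
Lemma R0 : R 0. Proof. by rewrite -(subrr 1); apply: RB; apply: R1. Qed.
Lemma RN x : R x -> R (- x). Proof. by move=> h; rewrite -sub0r; apply: RB => //; apply: R0. Qed.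
Lemma RD x y : R x -> R y -> R (x + y).
Proof. by move=> hx hy; rewrite -(opprK y); apply: RB => //; apply: RN. Qed.
Lemma Rsum (I : Type) (s : seq I) (P : pred I) (F : I -> K) :
  (forall i, P i -> R (F i)) -> R (\sum_(i <- s | P i) F i).
Proof.
move=> h; elim: s => [|x s IH]; first by rewrite big_nil R0.
by rewrite big_cons; case: ifP => // Px; apply: RD => //; apply: h.
Qed.
Lemma Rsum_seq (I : eqType) (s : seq I) (F : I -> K) :
  (forall i, i \in s -> R (F i)) -> R (\sum_(i <- s) F i).
Proof. by move=> h; rewrite big_seq; apply: Rsum. Qed.

Lemma Rg0 a : Rg a 0. Proof. by case: HR => _ [h _ _ _]; case: (h a) => [? _]. Qed.
Lemma RgB a x y : Rg a x -> Rg a y -> Rg a (x - y). Proof. by case: HR => _ [h _ _ _]; case: (h a) => _ [hb _]; apply: hb. Qed.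
Lemma RgR a x : Rg a x -> R x. Proof. by case: HR => _ [h _ _ _]; case: (h a) => _ [_ hb]; apply: hb. Qed.
Lemma RgM a b x y : Rg a x -> Rg b y -> Rg (a + b) (x * y). Proof. by case: HR => _ [_ h _ _]; apply: h. Qed.
Lemma RgN a x : Rg a x -> Rg a (- x). Proof. by move=> h; rewrite -sub0r; apply: RgB => //; apply: Rg0. Qed.
Lemma RgD a x y : Rg a x -> Rg a y -> Rg a (x + y).
Proof. by move=> hx hy; rewrite -(opprK y); apply: RgB => //; apply: RgN. Qed.
Lemma Rgsum a (I : Type) (s : seq I) (P : pred I) (F : I -> K) :
  (forall i, P i -> Rg a (F i)) -> Rg a (\sum_(i <- s | P i) F i).
Proof.
move=> h; elim: s => [|x s IH]; first by rewrite big_nil Rg0.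
by rewrite big_cons; case: ifP => // Px; apply: RgD => //; apply: h.
Qed.
Lemma Rgsum_seq a (I : eqType) (s : seq I) (F : I -> K) :
  (forall i, i \in s -> Rg a (F i)) -> Rg a (\sum_(i <- s) F i).
Proof. by move=> h; rewrite big_seq; apply: Rgsum. Qed.

Lemma decomp_ex (r : K) : exists sc : seq G * (G -> K), R r ->
  [/\ uniq sc.1, (forall a, a \in sc.1 -> Rg a (sc.2 a)) & r = \sum_(a <- sc.1) sc.2 a].
Proof.
case: (classic (R r)) => hr; last by exists ([::], fun _ => 0).
case: HR => _ [_ _ h _]; case: (h r hr) => s [c [u hc e]].
by exists (s, c).
Qed.

Definition decomp r := proj1_sig (constructive_indefinite_description _ (decomp_ex r)).
Definition supp r := (decomp r).1.
Definition comp r a := if a \in supp r then (decomp r).2 a else 0.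

Lemma decompP r : R r ->
  [/\ uniq (supp r), (forall a, a \in supp r -> Rg a ((decomp r).2 a)) &
      r = \sum_(a <- supp r) (decomp r).2 a].
Proof. exact: (proj2_sig (constructive_indefinite_description _ (decomp_ex r))). Qed.

Lemma ext_sum (s u : seq G) (c : G -> K) : uniq s -> uniq u -> {subset s <= u} ->
  \sum_(a <- u) (if a \in s then c a else 0) = \sum_(a <- s) c a.
Proof.
move=> us uu su; rewrite -big_mkcond -big_filter; apply: perm_big.
apply: uniq_perm; first exact: filter_uniq.
  by [].
move=> a; rewrite mem_filter; case: (boolP (a \in s)) => //= h.
by rewrite (su _ h).
Qed.

Lemma uniq_dec (s s' : seq G) (c c' : G -> K) : uniq s -> uniq s' ->
  (forall a, a \in s -> Rg a (c a)) -> (forall a, a \in s' -> Rg a (c' a)) ->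
  \sum_(a <- s) c a = \sum_(a <- s') c' a ->
  forall a, (if a \in s then c a else 0) = (if a \in s' then c' a else 0).
Proof.
move=> us us' hc hc' e a.
pose u := undup (s ++ s').
pose d b := (if b \in s then c b else 0) - (if b \in s' then c' b else 0).
have uu : uniq u by apply: undup_uniq.
have hd : forall b, b \in u -> Rg b (d b).
  move=> b _; apply: RgB; case: ifP => h; by [apply: hc | apply: Rg0 | apply: hc' ].
have sd : \sum_(b <- u) d b = 0.
  rewrite sumrB !ext_sum // ?e ?subrr // => b hb; rewrite mem_undup mem_cat hb ?orbT //.
case: HR => _ [_ _ _ hu].
case: (boolP (a \in u)) => ha.
  by apply/eqP; rewrite -subr_eq0; apply/eqP; apply: (hu u d uu hd sd a ha).
move: ha; rewrite mem_undup mem_cat negb_or => /andP[/negbTE -> /negbTE ->] //.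
Qed.

Lemma comp_spec r : R r -> [/\ uniq (supp r), (forall a, Rg a (comp r a)),
  r = \sum_(a <- supp r) comp r a & forall a, a \notin supp r -> comp r a = 0].
Proof.
move=> hr; case: (decompP hr) => u hc e; split => //.
- by move=> a; rewrite /comp; case: ifP => h; [apply: hc | apply: Rg0].
- by rewrite {1}e; apply: eq_big_seq => a h; rewrite /comp h.
- by move=> a; rewrite /comp => /negbTE ->.
Qed.

Lemma comp_uniq r (s : seq G) (c : G -> K) : uniq s -> (forall a, a \in s -> Rg a (c a)) ->
  r = \sum_(a <- s) c a -> forall a, comp r a = if a \in s then c a else 0.
Proof.
move=> us hc e a.
have hr : R r by rewrite e; apply: Rsum_seq => i hi; apply: (RgR (hc _ hi)).
case: (decompP hr) => u hc' e'.
rewrite /comp; apply: (uniq_dec u us hc' hc); by rewrite -e -e'.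
Qed.

Lemma comp_gen (I : eqType) (L : seq I) (deg : I -> G) (h : I -> K) :
  (forall i, Rg (deg i) (h i)) ->
  forall a, comp (\sum_(i <- L) h i) a = \sum_(i <- L | deg i == a) h i.
Proof.
move=> hh a.
pose s := undup (map deg L).
pose c b := \sum_(i <- L | deg i == b) h i.
have us : uniq s by apply: undup_uniq.
have hc : forall b, b \in s -> Rg b (c b).
  by move=> b _; apply: Rgsum => i /eqP <-.
have e : \sum_(i <- L) h i = \sum_(b <- s) c b.
  rewrite /c; under [RHS]eq_bigr do rewrite big_mkcond.
  rewrite exchange_big /=; apply: eq_big_seq => i hi.
  rewrite -big_mkcond /=.
  under eq_bigl do rewrite eq_sym.
  by rewrite sum_pred1_uniq // mem_undup map_f.
rewrite e (comp_uniq us hc (erefl _)) /c; case: ifP => // ha.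
rewrite big1_seq // => i /andP[/eqP di hi]; move: ha; by rewrite mem_undup -di map_f.
Qed.

Lemma comp_hom b x a : Rg b x -> comp x a = if a == b then x else 0.
Proof.
move=> hx; rewrite (@comp_uniq x [:: b] (fun _ => x)) //.
- by rewrite inE.
- by move=> c; rewrite inE => /eqP ->.
- by rewrite big_seq1.
Qed.

Lemma comp0 a : comp 0 a = 0.
Proof. by rewrite (comp_hom a (Rg0 a)); case: ifP. Qed.

Lemma sum_sup x (u : seq G) : R x -> uniq u -> {subset supp x <= u} ->
  \sum_(a <- u) comp x a = x.
Proof.
move=> hx uu su; case: (comp_spec hx) => us _ e h0.
rewrite [RHS]e -(ext_sum _ us uu su); apply: eq_bigr => a _.
by case: ifP => // /negbT /h0.
Qed.

Lemma comp_add x y a : R x -> R y -> comp (x + y) a = comp x a + comp y a.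
Proof.
move=> hx hy; pose u := undup (supp x ++ supp y).
have uu : uniq u by apply: undup_uniq.
rewrite (@comp_uniq (x + y) u (fun a => comp x a + comp y a)) //.
- case: ifP => // /negbT; rewrite mem_undup mem_cat negb_or => /andP[h1 h2].
  case: (comp_spec hx) => _ _ _ ->//; case: (comp_spec hy) => _ _ _ ->//.
  by rewrite addr0.
- move=> b _; apply: RgD; [by case: (comp_spec hx) | by case: (comp_spec hy)].
- rewrite big_split /= !sum_sup // => b hb; rewrite mem_undup mem_cat hb ?orbT //.
Qed.

Lemma compN x a : R x -> comp (- x) a = - comp x a.
Proof.
move=> hx; apply/eqP; rewrite -subr_eq0 opprK -comp_add ?addNr ?comp0 //.
exact: RN.
Qed.

Lemma comp_sum (I : Type) (L : seq I) (F : I -> K) a :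
  (forall i, R (F i)) -> comp (\sum_(i <- L) F i) a = \sum_(i <- L) comp (F i) a.
Proof.
move=> hF; elim: L => [|i L IH]; first by rewrite !big_nil comp0.
rewrite !big_cons comp_add ?IH //; apply: Rsum => j _; exact: hF.
Qed.

Lemma comp_mul x y c : R x -> R y ->
  comp (x * y) c = \sum_(p <- [seq (a, b) | a <- supp x, b <- supp y] | p.1 + p.2 == c)
     comp x p.1 * comp y p.2.
Proof.
move=> hx hy.
have -> : x * y = \sum_(p <- [seq (a, b) | a <- supp x, b <- supp y]) comp x p.1 * comp y p.2.
  case: (comp_spec hx) => _ _ ex _; case: (comp_spec hy) => _ _ ey _.
  rewrite big_allpairs /= {1}ex {1}ey big_distrlr /=.
  by apply: eq_bigr => a _; apply: eq_bigr.
apply: (@comp_gen _ _ (fun p : G * G => p.1 + p.2) (fun p : G * G => comp x p.1 * comp y p.2)) => p.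
by apply: RgM; [case: (comp_spec hx) | case: (comp_spec hy)].
Qed.

Lemma comp_homM b t y a : Rg b t -> R y -> comp (t * y) (b + a) = t * comp y a.
Proof.
move=> ht hy; case: (comp_spec hy) => uy hc ey h0.
have -> : t * y = \sum_(a' <- supp y) t * comp y a' by rewrite {1}ey mulr_sumr.
rewrite (@comp_gen _ _ (fun a' => b + a') (fun a' => t * comp y a')); last by move=> a'; apply: RgM.
have -> : \sum_(i <- supp y | b + i == b + a) t * comp y i = \sum_(i <- supp y | i == a) t * comp y i.
  apply: eq_bigl => i; apply/eqP/eqP => [/canc|-> //]; exact.
rewrite sum_pred1_uniq //; case: ifP => // /negbT /h0 ->; by rewrite mulr0.
Qed.

Lemma comp_homM_ex b t y c : Rg b t -> R y -> exists r, R r /\ comp (t * y) c = t * r.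
Proof.
move=> ht hy; case: (comp_spec hy) => uy hc ey h0.
have -> : t * y = \sum_(a' <- supp y) t * comp y a' by rewrite {1}ey mulr_sumr.
rewrite (@comp_gen _ _ (fun a' => b + a') (fun a' => t * comp y a')); last by move=> a'; apply: RgM.
exists (\sum_(i <- supp y | b + i == c) comp y i); split; last by rewrite mulr_sumr.
apply: Rsum => i _; exact: (RgR (hc i)).
Qed.

Definition hom (x : K) := exists a, Rg a x.

Lemma one_hom : Rg 0 1.
Proof.
have h1 : R 1 := R1.
case: (comp_spec h1) => u hc e h0.
have [a0 ha0] : exists a0, comp 1 a0 != 0.
  apply: NNPP => hn; move: e; rewrite big1 => [/eqP|i _]; first by rewrite oner_eq0.
  by apply: NNPP => hi; apply: hn; exists i; apply/eqP.
have hx := hc a0.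
have key : forall a, a != 0 -> comp 1 a = 0.
  move=> a ha; have := comp_homM a hx h1; rewrite mulr1 (comp_hom _ hx).
  case: ifP => [/eqP|_ /esym /eqP]; last by rewrite mulf_eq0 (negbTE ha0) => /eqP.
  by rewrite -{2}(addr0 a0) => /canc /eqP; rewrite (negbTE ha).
rewrite e; apply: Rgsum => a _; case: (eqVneq a 0) => [->|ha]; first exact: hc.
by rewrite key // Rg0.
Qed.


Lemma hom_div d t y c : Rg d t -> t != 0 -> R y -> Rg c (t * y) -> hom y.
Proof.
move=> ht t0 hy hc.
case: (comp_spec hy) => uy hcy ey h0.
case: (classic (exists a0, d + a0 = c)) => [[a0 ea0]|hn].
  exists a0; rewrite ey; apply: Rgsum => a _.
  case: (eqVneq a a0) => [->|ha]; first exact: hcy.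
  have := comp_homM a ht hy; rewrite (comp_hom _ hc); case: ifP => [/eqP|_].
    by rewrite -ea0 => /canc /eqP; rewrite (negbTE ha).
  move/esym/eqP; rewrite mulf_eq0 (negbTE t0) /= => /eqP ->; exact: Rg0.
exists 0; rewrite ey; apply: Rgsum => a _.
have := comp_homM a ht hy; rewrite (comp_hom _ hc); case: ifP => [/eqP h|_].
  by case: hn; exists a.
move/esym/eqP; rewrite mulf_eq0 (negbTE t0) /= => /eqP ->; exact: Rg0.
Qed.

End Graded.

Section Order.
Variable (G : nmodType).
Hypothesis HG : grading_monoid G.

Definition ordP (Le : G * G -> Prop) :=
  (forall a, Le (a, a)) /\ (forall a b c, Le (a, b) -> Le (b, c) -> Le (a, c)) /\
      (forall a b, Le (a, b) -> Le (b, a) -> a = b) /\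
      (forall a b c, Le (a, b) -> Le (a + c, b + c)) /\
      (forall a b c, Le (a + c, b + c) -> Le (a, b)) /\
      (forall n a b, Le (a *+ n.+1, b *+ n.+1) -> Le (a, b)).

Lemma ordP_eq : ordP (fun p => p.1 = p.2).
Proof.
case: HG => hc ht; do ![split] => /=.
- by move=> a b c -> ->.
- by move=> a b ->.
- by move=> a b c ->.
- by move=> a b c; apply: hc.
- by move=> n a b; apply: ht.
Qed.

Section Props.
Variable Le : G * G -> Prop.
Hypothesis hL : ordP Le.

Lemma leR a : Le (a, a). Proof. by case: hL => h _. Qed.
Lemma leT a b c : Le (a, b) -> Le (b, c) -> Le (a, c). Proof. by case: hL => _ [h _]; apply: h. Qed.
Lemma leA a b : Le (a, b) -> Le (b, a) -> a = b. Proof. by case: hL => _ [_ [h _]]; apply: h. Qed.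
Lemma leDr a b c : Le (a, b) -> Le (a + c, b + c). Proof. by case: hL => _ [_ [_ [h _]]]; apply: h. Qed.
Lemma leDl a b c : Le (a, b) -> Le (c + a, c + b).
Proof. by move=> h; rewrite ![c + _]addrC; apply: leDr. Qed.
Lemma leK a b c : Le (a + c, b + c) -> Le (a, b). Proof. by case: hL => _ [_ [_ [_ [h _]]]]; apply: h. Qed.
Lemma leI n a b : Le (a *+ n.+1, b *+ n.+1) -> Le (a, b). Proof. by case: hL => _ [_ [_ [_ [_ h]]]]; apply: h. Qed.
Lemma leD a b c d : Le (a, b) -> Le (c, d) -> Le (a + c, b + d).
Proof. by move=> h1 h2; apply: (leT (leDr c h1)); apply: leDl. Qed.
Lemma leMn n a b : Le (a, b) -> Le (a *+ n, b *+ n).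
Proof.
move=> h; elim: n => [|n IH]; first by rewrite !mulr0n; apply: leR.
by rewrite !mulrS; apply: leD.
Qed.
End Props.

Lemma ac4 (u v w t : G) : u + v + (w + t) = (u + (v + t)) + w.
Proof. by rewrite addrACA -addrA (addrC w) addrA. Qed.
Lemma ac4' (u v w t : G) : u + v + (w + t) = (w + (v + t)) + u.
Proof. by rewrite [RHS]addrC -addrA (addrCA v). Qed.

Section Extend.
Variable Le : G * G -> Prop.
Hypothesis hL : ordP Le.
Variables a b : G.
Hypothesis nab : ~ Le (a, b).
Hypothesis nba : ~ Le (b, a).

Definition Le' (p : G * G) := exists n m, Le (p.1 *+ n.+1 + b *+ m, p.2 *+ n.+1 + a *+ m).

Lemma Le'_ext p : Le p -> Le' p.
Proof. by case: p => x y h; exists 0%N, 0%N; rewrite /= !mulr0n !addr0 !mulr1n. Qed.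

Lemma Le'_ab : Le' (a, b).
Proof. by exists 0%N, 1%N; rewrite /= !mulr1n addrC; apply: (leR hL). Qed.

Lemma ordP_Le' : ordP Le'.
Proof.
do ![split].
- by move=> x; exists 0%N, 0%N; apply: (leR hL).
- move=> x y z [n [m h1]] [n' [m' h2]] /=.
  have h := leD hL (leMn hL n'.+1 h1) (leMn hL n.+1 h2).
  move: h => /=; rewrite !mulrnDl -!mulrnA (mulnC n'.+1 n.+1) ac4 ac4' => /(leK hL).
  rewrite -!mulrnDr => h.
  exists (n.+1 * n'.+1).-1, (m * n'.+1 + m' * n.+1).
  by rewrite prednK ?muln_gt0.
- move=> x y [n [m h1]] [n' [m' h2]] /=.
  have h := leD hL (leMn hL n'.+1 h1) (leMn hL n.+1 h2).
  move: h => /=; rewrite !mulrnDl -!mulrnA (mulnC n'.+1 n.+1) ac4 ac4' => /(leK hL).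
  rewrite (addrC (x *+ _)) [X in Le (_, X)](addrC (x *+ _)) => /(leK hL).
  rewrite -!mulrnDr; case ek: (m * n'.+1 + m' * n.+1)%N => [|k].
    move: ek => /eqP; rewrite addn_eq0 !muln_eq0 /= !orbF => /andP[/eqP em /eqP em'] _.
    move: h1 h2; rewrite /= em em' !mulr0n !addr0 => /(leI hL) h1 /(leI hL) h2.
    exact: (leA hL h1 h2).
  by move=> /(leI hL).
- move=> x y c [n [m h]]; exists n, m => /=.
  rewrite !mulrnDl (addrAC (x *+ _)) (addrAC (y *+ _)); exact: (leDr hL).
- move=> x y c [n [m h]]; exists n, m; move: h => /=.
  rewrite !mulrnDl (addrAC (x *+ _)) (addrAC (y *+ _)); exact: (leK hL).
- move=> k x y [n [m h]]; exists (k.+1 * n.+1).-1, m.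
  have -> : (k.+1 * n.+1).-1.+1 = (k.+1 * n.+1)%N by rewrite prednK ?muln_gt0.
  by move: h; rewrite /= !mulrnA.
Qed.

End Extend.

Lemma exists_total_order : exists Le : G * G -> Prop, ordP Le /\ forall a b, Le (a, b) \/ Le (b, a).
Proof.
have ex0 : exists t : G * G, t.1 = t.2 by exists (0, 0).
have hch : forall F : (G * G -> Prop) -> Prop, (forall X, F X -> ordP X) ->
   (forall X Y, F X -> F Y -> (forall t, X t -> Y t) \/ (forall t, Y t -> X t)) ->
   (exists X, F X) -> ordP (fun t => exists X, F X /\ X t).
  move=> F FP Ftot [X0 FX0].
  pose U := fun t => exists X, F X /\ X t.
  have two : forall p q, U p -> U q -> exists X, F X /\ X p /\ X q.
    move=> p q [X [FX Xp]] [Y [FY Yq]]; case: (Ftot X Y FX FY) => h.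
      by exists Y; split => //; split => //; apply: h.
    by exists X; split => //; split => //; apply: h.
  do ![split].
  + by move=> x; exists X0; split => //; case: (FP X0 FX0) => h _; apply: h.
  + move=> x y z hxy hyz; case: (two _ _ hxy hyz) => X [FX [h1 h2]].
    by exists X; split => //; apply: (leT (FP X FX) h1 h2).
  + move=> x y hxy hyx; case: (two _ _ hxy hyx) => X [FX [h1 h2]].
    exact: (leA (FP X FX) h1 h2).
  + by move=> x y c [X [FX h]]; exists X; split => //; apply: (leDr (FP X FX)).
  + by move=> x y c [X [FX h]]; exists X; split => //; apply: (leK (FP X FX) h).
  + by move=> k x y [X [FX h]]; exists X; split => //; apply: (leI (FP X FX) h).
have [A [PA [_ Amax]]] := @zorn_base (G * G) ordP (fun p : G * G => p.1 = p.2) ordP_eq ex0 hch.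
exists A; split => // x y.
apply: NNPP => hn.
have nxy : ~ A (x, y) by move=> h; apply: hn; left.
have nyx : ~ A (y, x) by move=> h; apply: hn; right.
apply: nxy; apply: (Amax (Le' A x y)); first exact: ordP_Le'.
  exact: Le'_ext.
exact: Le'_ab.
Qed.

End Order.

Section Prime.
Variables (G : nmodType) (K : fieldType) (R : pred K) (Rg : G -> pred K).
Hypothesis HG : grading_monoid G.
Hypothesis HR : graded_domain R Rg.
Variable Le : G * G -> Prop.
Hypothesis hL : ordP Le.
Hypothesis tot : forall a b, Le (a, b) \/ Le (b, a).

Local Notation comp := (comp HR).
Local Notation supp := (supp HR).

Lemma max_seq (s : seq G) : s != [::] -> exists2 a, a \in s & forall b, b \in s -> Le (b, a).
Proof.
elim: s => [//|x s IH] _.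
case: (eqVneq s [::]) => [->|sn].
  by exists x; rewrite ?inE // => b; rewrite inE => /eqP ->; apply: (leR hL).
case: (IH sn) => a ha hm.
case: (tot x a) => h.
  exists a; first by rewrite inE ha orbT.
  by move=> b; rewrite inE => /orP[/eqP ->|/hm].
exists x; first by rewrite inE eqxx.
by move=> b; rewrite inE => /orP[/eqP ->|/hm hb]; [apply: (leR hL) | apply: (leT hL hb h)].
Qed.

Variable Q : K -> Prop.
Hypothesis QR : forall x, Q x -> R x.
Hypothesis Q0 : Q 0.
Hypothesis QD : forall x y, Q x -> Q y -> Q (x + y).
Hypothesis QM : forall r x, R r -> Q x -> Q (r * x).
Hypothesis Qh : forall x a, Q x -> Q (comp x a).
Hypothesis Qhp : forall a b x y, Rg a x -> Rg b y -> Q (x * y) -> Q x \/ Q y.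

Lemma QN x : Q x -> Q (- x).
Proof. by move=> h; rewrite -mulN1r; apply: QM => //; exact: (RN HR (R1 HR)). Qed.

Lemma Qsum (I : Type) (s : seq I) (P : pred I) (F : I -> K) :
  (forall i, P i -> Q (F i)) -> Q (\sum_(i <- s | P i) F i).
Proof.
move=> h; elim: s => [|x s IH]; first by rewrite big_nil.
by rewrite big_cons; case: ifP => // Px; apply: QD => //; apply: h.
Qed.

Lemma split_Q x : R x -> exists2 s : seq G,
   (uniq s /\ forall a, a \in s -> ~ Q (comp x a)) & Q (x - \sum_(a <- s) comp x a).
Proof.
move=> hx; case: (comp_spec HR hx) => u hc e _.
exists [seq a <- supp x | `[< ~ Q (comp x a) >]].
  split; first exact: filter_uniq.
  by move=> a; rewrite mem_filter => /andP[/asboolP].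
rewrite big_filter {1}e (bigID (fun a => `[< ~ Q (comp x a) >])) /= addrAC subrr add0r.
apply: Qsum => a /negP hn; apply: NNPP => hq; apply: hn; exact/asboolP.
Qed.

Lemma hprime_prime x y : R x -> R y -> Q (x * y) -> Q x \/ Q y.
Proof.
move=> hx hy hxy.
case: (split_Q hx) => sx [usx hsx] qx.
case: (split_Q hy) => sy [usy hsy] qy.
set x' := \sum_(a <- sx) comp x a in qx.
set y' := \sum_(a <- sy) comp y a in qy.
have Rx' : R x' by apply: (Rsum HR) => a _; case: (comp_spec HR hx) => _ h _ _; apply: (RgR HR (h a)).
have Ry' : R y' by apply: (Rsum HR) => a _; case: (comp_spec HR hy) => _ h _ _; apply: (RgR HR (h a)).
case: (eqVneq sx [::]) => [ex|nx].
  by left; move: qx; rewrite /x' ex big_nil subr0.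
case: (eqVneq sy [::]) => [ey|ny].
  by right; move: qy; rewrite /y' ey big_nil subr0.
have Qx'y' : Q (x' * y').
  have -> : x' * y' = x * y + (- (y * (x - x'))) + (- (x' * (y - y'))) by ring.
  apply: QD; first apply: QD => //.
    by apply: QN; apply: QM.
  by apply: QN; apply: QM.
case: (max_seq nx) => a0 ha0 ma0.
case: (max_seq ny) => b0 hb0 mb0.
pose L := [seq (a, b) | a <- sx, b <- sy].
have eL : x' * y' = \sum_(p <- L) comp x p.1 * comp y p.2.
  by rewrite big_allpairs /x' /y' big_distrlr /=; apply: eq_bigr => a _; apply: eq_bigr.
have hg : forall p : G * G, Rg (p.1 + p.2) (comp x p.1 * comp y p.2).
  by move=> p; apply: (RgM HR); [case: (comp_spec HR hx) | case: (comp_spec HR hy)].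
have := Qh (a0 + b0) Qx'y'.
rewrite eL (@comp_gen _ _ _ _ HR _ L (fun p : G * G => p.1 + p.2) (fun p : G * G => comp x p.1 * comp y p.2) hg).
have uL : uniq L by apply: allpairs_uniq => // -[? ?] [? ?] _ _ [-> ->].
have mL : (a0, b0) \in L by apply: allpairs_f.
have eqp : forall p, (p \in L) && (p.1 + p.2 == a0 + b0) = (p \in L) && (p == (a0, b0)).
  move=> [a b]; case: (boolP ((a, b) \in L)) => //= /allpairsP [[a' b'] [ha hb [-> ->]]] /=.
  apply/eqP/eqP => [e|[-> ->] //].
  have l1 := leDr hL b' (ma0 _ ha).
  have l2 := leDl hL a0 (mb0 _ hb).
  rewrite e in l1.
  have e2 : a0 + b' = a0 + b0 by apply: (leA hL l2 l1).
  have eb := canc HG e2.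
  rewrite eb addrC [RHS]addrC in e.
  by rewrite (canc HG e) eb.
rewrite big_seq_cond (eq_bigl _ _ eqp) -big_seq_cond sum_pred1_uniq // mL.
have cx := comp_spec HR hx; have cy := comp_spec HR hy.
case: cx => _ cx _ _; case: cy => _ cy _ _.
case/(Qhp (cx a0) (cy b0)) => h.
  by case: (hsx _ ha0 h).
by case: (hsy _ hb0 h).
Qed.

End Prime.

Section Spans.
Variable F : fieldType.
Implicit Types (S T E : F -> Prop).

Lemma span_nil S T : span S T 0.
Proof. by exists [::]; rewrite big_nil. Qed.

Lemma span_add S T x y : span S T x -> span S T y -> span S T (x + y).
Proof.
move=> [s [hs ->]] [t [ht ->]]; exists (s ++ t); rewrite big_cat; split => // p.
by rewrite mem_cat => /orP[/hs|/ht].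
Qed.

Lemma span_scale S T r x : (forall a b, S a -> S b -> S (a * b)) -> S r ->
  span S T x -> span S T (r * x).
Proof.
move=> hM hr [s [hs ->]]; exists [seq (r * p.1, p.2) | p <- s]; split.
  move=> q /mapP [p ps ->] /=; case: (hs p ps) => h1 h2; split => //; exact: hM.
by rewrite big_map mulr_sumr; apply: eq_bigr => p _; rewrite mulrA.
Qed.

Lemma span_in S T x : S 1 -> T x -> span S T x.
Proof. by move=> h1 hx; exists [:: (1, x)]; rewrite big_seq1 mul1r; split => // p; rewrite inE => /eqP ->. Qed.

Lemma span_sub S T E : E 0 -> (forall x y, E x -> E y -> E (x + y)) ->
  (forall r x, S r -> T x -> E (r * x)) -> forall x, span S T x -> E x.
Proof.
move=> h0 hD hM x [s [hs ->]]; elim: s hs => [|p s IH] hs; first by rewrite big_nil.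
rewrite big_cons; apply: hD.
  by case: (hs p (mem_head _ _)) => h1 h2; apply: hM.
by apply: IH => q qs; apply: hs; rewrite inE qs orbT.
Qed.

Lemma span_mono S T T' x : (forall y, T y -> T' y) -> span S T x -> span S T' x.
Proof.
move=> h [s [hs ->]]; exists s; split => // p ps; case: (hs p ps) => h1 h2; split => //; exact: h.
Qed.

Lemma span_submod S T : (forall a b, S a -> S b -> S (a * b)) -> submod S (span S T).
Proof.
move=> hM; split; first exact: span_nil.
split; first by move=> x y; apply: span_add.
by move=> r x hr; apply: span_scale.
Qed.

Lemma span_sum S T (I : Type) (l : seq I) (f : I -> F) :
  (forall i, span S T (f i)) -> span S T (\sum_(i <- l) f i).
Proof.
move=> h; elim: l => [|i l IH]; first by rewrite big_nil; apply: span_nil.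
by rewrite big_cons; apply: span_add.
Qed.

End Spans.

Section SS.
Variables (G : nmodType) (K : fieldType) (R : pred K) (Rg : G -> pred K).
Hypothesis HG : grading_monoid G.
Hypothesis HR : graded_domain R Rg.
Variable st : (K -> Prop) -> (K -> Prop).
Hypothesis Hst : semistar R st.

Local Notation Rs := (Rset R).
Local Notation comp := (comp HR).
Local Notation sf := (star_f R st).

Definition ideal (Q : K -> Prop) := (forall x, Q x -> R x) /\ Q 0 /\
  (forall x y, Q x -> Q y -> Q (x + y)) /\ (forall r x, R r -> Q x -> Q (r * x)).
Definition hclosed (Q : K -> Prop) := forall x a, Q x -> Q (comp x a).

Lemma RsM a b : Rs a -> Rs b -> Rs (a * b). Proof. rewrite /Rset; exact: (RM HR). Qed.
Lemma Rs1 : Rs 1. Proof. rewrite /Rset; exact: (R1 HR). Qed.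

Lemma submodR : submod Rs Rs.
Proof. rewrite /Rset; split; first exact: (R0 HR). by split => [x y|r x]; [apply: (RD HR) | apply: (RM HR)]. Qed.
Lemma nzR : nz_submod Rs Rs.
Proof. split; first exact: submodR. by exists 1; rewrite oner_eq0; split => //; apply: Rs1. Qed.

Lemma span_nzR (T : K -> Prop) : (exists y, y != 0 /\ span Rs T y) -> nz_submod Rs (span Rs T).
Proof. move=> h; split => //; apply: span_submod; exact: RsM. Qed.

Lemma st_nz E : nz_submod Rs E -> nz_submod Rs (st E). Proof. by case: Hst => h _ _ _ _; apply: h. Qed.
Lemma st_scale x E : x != 0 -> nz_submod Rs E -> sameset (st (scaleset x E)) (scaleset x (st E)).
Proof. by case: Hst => _ h _ _ _; apply: h. Qed.
Lemma st_mono E E' : nz_submod Rs E -> nz_submod Rs E' -> incl E E' -> incl (st E) (st E').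
Proof. by case: Hst => _ _ h _ _; apply: h. Qed.
Lemma st_ext E : nz_submod Rs E -> incl E (st E). Proof. by case: Hst => _ _ _ h _; apply: h. Qed.
Lemma st_idem E : nz_submod Rs E -> sameset (st (st E)) (st E). Proof. by case: Hst => _ _ _ _ h; apply: h. Qed.

Lemma st_one E : nz_submod Rs E -> (forall x, E x -> R x) -> st E 1 -> sameset (st E) (st Rs).
Proof.
move=> nE ER h1 x; split.
  by apply: st_mono => //; apply: nzR.
have nst := st_nz nE.
have RE : incl Rs (st E).
  move=> r hr; rewrite -(mulr1 r); case: nst => [[_ [_ hM]] _]; exact: hM.
move=> hx; apply/(st_idem nE); apply: (st_mono nzR nst RE hx).
Qed.

Lemma sf_mono E E' : incl E E' -> incl (sf E) (sf E').
Proof. by move=> h x [s [h1 h2 h3]]; exists s; split => // y /h1 /h. Qed.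

Lemma sf_sub_st E : (forall x, E x -> R x) -> incl (sf E) (st Rs).
Proof.
move=> ER x [s [h1 h2 h3]]; apply: (st_mono (span_nzR h2) nzR) h3 => y hy.
exact: ER (h1 _ hy).
Qed.

Lemma sf_one E : (forall x, E x -> R x) -> sf E 1 -> sameset (sf E) (st Rs).
Proof.
move=> ER [s [h1 h2 h3]] x; split; first exact: sf_sub_st.
move=> hx; exists s; split => //.
have nF := span_nzR h2.
apply/(st_one nF) => // y hy; exact: ER (h1 _ hy).
Qed.

Lemma st_Rs1 : st Rs 1.
Proof. apply: (st_ext nzR); exact: Rs1. Qed.

Lemma sf_of_one E : sameset (sf E) (st Rs) -> sf E 1.
Proof. by move=> h; apply/h; apply: st_Rs1. Qed.

Lemma scaleset_nz e E : e != 0 -> nz_submod Rs E -> nz_submod Rs (scaleset e E).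
Proof.
move=> e0 [[h0 [hD hM]] [y [y0 hy]]]; split.
  split; first by exists 0; rewrite mulr0.
  split.
    by move=> x z [x' [hx' ->]] [z' [hz' ->]]; exists (x' + z'); rewrite mulrDr; split => //; apply: hD.
  by move=> r x hr [x' [hx' ->]]; exists (r * x'); rewrite mulrCA; split => //; apply: hM.
by exists (e * y); rewrite mulf_neq0 //; split => //; exists y.
Qed.

Lemma sf_prod E E' : sf E 1 -> sf E' 1 -> sf (mulmod Rs E E') 1.
Proof.
move=> [s [h1 [e0 [ne0 he0]] h3]] [t [h1' [y0 [ny0 hy0]]  h3']].
pose F0 := span Rs (fun y => y \in s).
pose F1 := span Rs (fun y => y \in t).
pose P := span Rs (fun z => z \in [seq x * y | x <- s, y <- t]).
have PM : forall e y, F0 e -> F1 y -> P (e * y).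
  move=> e y he hy.
  have key : forall x, x \in s -> P (x * y).
    move=> x xs; move: y hy; apply: span_sub.
    - by rewrite mulr0; apply: span_nil.
    - by move=> a b ha hb; rewrite mulrDr; apply: span_add.
    - move=> r z hr zt; rewrite mulrCA; apply: (span_scale RsM) => //.
      by apply: span_in; [apply: Rs1 | apply: allpairs_f].
  move: e he; apply: span_sub.
  - by rewrite mul0r; apply: span_nil.
  - by move=> a b ha hb; rewrite mulrDl; apply: span_add.
  - by move=> r z hr zs; rewrite -mulrA; apply: (span_scale RsM) => //; apply: key.
have nP : nz_submod Rs P.
  apply: span_nzR; exists (e0 * y0); rewrite mulf_neq0 //; split => //; exact: PM.
have nF0 : nz_submod Rs F0 by apply: span_nzR; exists e0.
have nF1 : nz_submod Rs F1 by apply: span_nzR; exists y0.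
have F0P : incl F0 (st P).
  move=> e he; case: (eqVneq e 0) => [->|ne].
    by case: (st_nz nP) => [[]].
  have i1 : incl (scaleset e F1) P by move=> z [y [hy ->]]; apply: PM.
  have := st_mono (scaleset_nz ne nF1) nP i1; move=> /(_ e) h; apply: h.
  by apply/(st_scale ne nF1); exists 1; rewrite mulr1.
have h1P : st P 1.
  by apply/(st_idem nP); apply: (st_mono nF0 (st_nz nP) F0P).
exists [seq x * y | x <- s, y <- t]; split => //.
- move=> z; apply: span_sub.
  + exact: span_nil.
  + by move=> a b; apply: span_add.
  + move=> r x hr /allpairsP [[a b] [ha hb ->]] /=.
    apply: (span_scale RsM) => //; apply: span_in; first exact: Rs1.
    exists a, b; split; [apply: h1; apply: span_in => //; exact: Rs1|].
    by split => //; apply: h1'; apply: span_in => //; exact: Rs1.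
- by case: nP.
Qed.

End SS.

Lemma min_ex (P : nat -> Prop) : (exists i, P i) -> exists i, P i /\ forall j, (j < i)%N -> ~ P j.
Proof.
case=> i hi; have h : exists i, `[< P i >] by exists i; apply/asboolP.
case: (ex_minnP h) => m /asboolP hm hmin; exists m; split => // j jm hj.
by have := hmin j (asboolT hj); rewrite leqNgt jm.
Qed.

Section GI.
Variables (G : nmodType) (K : fieldType) (R : pred K) (Rg : G -> pred K).
Hypothesis HG : grading_monoid G.
Hypothesis HR : graded_domain R Rg.
Variable st : (K -> Prop) -> (K -> Prop).
Hypothesis Hst : semistar R st.

Local Notation Rs := (Rset R).
Local Notation comp := (comp HR).
Local Notation supp := (supp HR).
Local Notation sf := (star_f R st).
Local Notation hclosed := (hclosed HR).

Definition qprime (Q : K -> Prop) := ideal R Q /\ hclosed Q /\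
  (forall x y, R x -> R y -> Q (x * y) -> Q x \/ Q y) /\ ~ sf Q 1.

Lemma ideal_span T : (forall x, T x -> R x) -> ideal R (span Rs T).
Proof.
move=> TR; split.
  apply: span_sub.
  - exact: (R0 HR).
  - by move=> x y; apply: (RD HR).
  - by move=> r x hr /TR; apply: (RM HR).
split; first exact: span_nil.
split; first by move=> x y; apply: span_add.
by move=> r x hr; apply: (span_scale (RsM HR)).
Qed.

Lemma hclosed_span T : (forall x, T x -> R x /\ hom Rg x) -> hclosed (span Rs T).
Proof.
move=> TR x a hx.
suff : R x /\ forall a, span Rs T (comp x a) by case=> _; apply.
move: x hx; apply: span_sub.
- split; first exact: (R0 HR).
  by move=> b; rewrite (comp0 HR); apply: span_nil.
- move=> x y [hx cx] [hy cy]; split; first exact: (RD HR).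
  by move=> b; rewrite (comp_add HR) //; apply: span_add.
- move=> r t hr ht; case: (TR t ht) => Rt [d hd]; split; first exact: (RM HR).
  move=> b; rewrite mulrC; case: (comp_homM_ex HR b hd hr) => r' [hr' ->].
  rewrite mulrC; apply: (span_scale (RsM HR)) => //; apply: span_in => //; exact: (Rs1 HR).
Qed.

Lemma exists_qprime I0 : ideal R I0 -> hclosed I0 -> ~ sf I0 1 ->
  exists Q, qprime Q /\ incl I0 Q.
Proof.
move=> iI hI nI.
pose P (Q : K -> Prop) := ideal R Q /\ hclosed Q /\ ~ sf Q 1.
have ex0 : exists t, I0 t by exists 0; case: iI => _ [].
have hch : forall F : (K -> Prop) -> Prop, (forall X, F X -> P X) ->
   (forall X Y, F X -> F Y -> (forall t, X t -> Y t) \/ (forall t, Y t -> X t)) ->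
   (exists X, F X) -> P (fun t => exists X, F X /\ X t).
  move=> F FP Ftot [X0 FX0].
  have two : forall p q, (exists X, F X /\ X p) -> (exists X, F X /\ X q) ->
      exists X, F X /\ X p /\ X q.
    move=> p q [X [FX Xp]] [Y [FY Yq]]; case: (Ftot X Y FX FY) => h.
      by exists Y; split => //; split => //; apply: h.
    by exists X; split => //; split => //; apply: h.
  split; [split; [|split; [|split]] | split].
  - by move=> x [X [FX Xx]]; case: (FP X FX) => -[h _] _; apply: h.
  - by exists X0; split => //; case: (FP X0 FX0) => -[_ []].
  - move=> x y hx hy; case: (two _ _ hx hy) => X [FX [h1 h2]].
    by exists X; split => //; case: (FP X FX) => -[_ [_ [h _]]] _; apply: h.
  - move=> r x hr [X [FX h]]; exists X; split => //.
    by case: (FP X FX) => -[_ [_ [_ h']]] _; apply: h'.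
  - move=> x a [X [FX h]]; exists X; split => //.
    by case: (FP X FX) => _ [h' _]; apply: h'.
  - move=> [s [h1 h2 h3]].
    have : exists X, F X /\ forall y, y \in s -> X y.
      elim: s h1 {h2 h3} => [|x s IH] h1; first by exists X0.
      have hs : forall y, span Rs (fun z => z \in s) y -> exists X, F X /\ X y.
        by move=> y hy; apply: h1; apply: span_mono hy => z zs; rewrite inE zs orbT.
      case: (IH hs) => X [FX hX].
      have : exists Y, F Y /\ Y x.
        by apply: h1; apply: span_in; [exact: (Rs1 HR) | rewrite inE eqxx].
      move=> [Y [FY Yx]]; case: (Ftot X Y FX FY) => h.
        by exists Y; split => // y; rewrite inE => /orP[/eqP ->|/hX /h].
      by exists X; split => // y; rewrite inE => /orP[/eqP ->|/hX]; [apply: h|].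
    move=> [X [FX hX]]; case: (FP X FX) => -[_ [X0' [XD XM]]] [_ nX].
    apply: nX; exists s; split => //.
    by apply: span_sub => // r x hr /hX; apply: XM.
have [Q [[iQ [hQ nQ]] [IQ Qmax]]] := @zorn_base K P I0 (conj iI (conj hI nI)) ex0 hch.
exists Q; split => //; split => //; split => //; split => //.
have [Le [hL tot]] := exists_total_order HG.
have [QR [Q0 [QD QM]]] := iQ.
apply (hprime_prime HG hL tot Q0 QD QM hQ).
move=> a b x y hx hy hxy.
apply: NNPP => hn.
have nx : ~ Q x by move=> h; apply: hn; left.
have ny : ~ Q y by move=> h; apply: hn; right.
pose Qx (z : K) := fun w => exists q r, Q q /\ R r /\ w = q + z * r.
have QxP : forall z c, Rg c z -> ~ Q z -> sf (Qx z) 1.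
  move=> z c hz nz; apply: NNPP => hs.
  have Rz := RgR HR hz.
  have iZ : ideal R (Qx z).
    split; first by move=> w [q [r [hq [hr ->]]]]; apply: (RD HR); [apply: QR | apply: (RM HR)].
    split; first by exists 0, 0; rewrite mulr0 addr0; split => //; split => //; exact: (R0 HR).
    split.
      move=> w w' [q [r [hq [hr ->]]]] [q' [r' [hq' [hr' ->]]]].
      exists (q + q'), (r + r'); split; first exact: QD.
      by split; [apply: (RD HR) | ring].
    move=> s w hs' [q [r [hq [hr ->]]]]; exists (s * q), (s * r); split; first exact: QM.
    by split; [apply: (RM HR) | ring].
  have hZ : hclosed (Qx z).
    move=> w d [q [r [hq [hr ->]]]].
    rewrite (comp_add HR) //; last by apply: (RM HR).
      case: (comp_homM_ex HR d hz hr) => r' [hr' ->].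
      by exists (comp q d), r'; split => //; apply: hQ.
    exact: QR.
  have QQz : forall t, Q t -> Qx z t.
    by move=> t ht; exists t, 0; rewrite mulr0 addr0; split => //; split => //; exact: (R0 HR).
  have := Qmax (Qx z) (conj iZ (conj hZ hs)) QQz z.
  move=> h; apply: nz; apply: h; exists 0, 1; rewrite mulr1 add0r; split => //; split => //.
  exact: (R1 HR).
have hp := sf_prod HR Hst (QxP x a hx nx) (QxP y b hy ny).
apply: nQ; apply: (sf_mono _ hp) => w; apply: span_sub => //.
move=> r t hr [u [v [[q [r1 [hq [hr1 ->]]]] [[q' [r2 [hq' [hr2 ->]]] ->]]]]].
  apply: (QM) => //.
  have Rx := RgR HR hx; have Ry := RgR HR hy; have Rq := QR _ hq; have Rq' := QR _ hq'.
  have -> : (q + x * r1) * (q' + y * r2) = (q' + y * r2) * q + (x * r1) * q' + (r1 * r2) * (x * y) by ring.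
  apply: (QD); first apply: (QD).
  - by apply: (QM) => //; apply: (RD HR) => //; apply: (RM HR).
  - by apply: (QM) => //; apply: (RM HR).
  - by apply: (QM) => //; apply: (RM HR).
Qed.

End GI.

Section QX.
Variables (K : fieldType) (R : pred K) (Q : K -> Prop).
Hypothesis QR : forall x, Q x -> R x.
Hypothesis Q0 : Q 0.
Hypothesis QD : forall x y, Q x -> Q y -> Q (x + y).
Hypothesis QM : forall r x, R r -> Q x -> Q (r * x).
Hypothesis Qp : forall x y, R x -> R y -> Q (x * y) -> Q x \/ Q y.
Hypothesis RD : forall x y, R x -> R y -> R (x + y).
Hypothesis RN : forall x, R x -> R (- x).
Hypothesis R1 : R 1.

Lemma QsumQ (I : Type) (s : seq I) (P : pred I) (F : I -> K) :
  (forall i, P i -> Q (F i)) -> Q (\sum_(i <- s | P i) F i).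
Proof.
move=> h; elim: s => [|x s IH]; first by rewrite big_nil.
by rewrite big_cons; case: ifP => // Px; apply: QD => //; apply: h.
Qed.

Lemma QX_prime (p q : {poly K}) : inRX R p -> inRX R q ->
  ~ (forall i, Q p`_i) -> ~ (forall i, Q q`_i) -> ~ (forall i, Q (p * q)`_i).
Proof.
move=> hp hq np nq hpq.
have [i [hi mi]] : exists i0, ~ Q p`_i0 /\ forall j0, (j0 < i0)%N -> ~ ~ Q p`_j0.
  by apply: min_ex; apply: NNPP => h; apply: np => k; apply: NNPP => h'; apply: h; exists k.
have [j [hj mj]] : exists i0, ~ Q q`_i0 /\ forall j0, (j0 < i0)%N -> ~ ~ Q q`_j0.
  by apply: min_ex; apply: NNPP => h; apply: nq => k; apply: NNPP => h'; apply: h; exists k.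
have e := hpq (i + j)%N; rewrite coefM in e.
have iI : (i < (i + j).+1)%N by rewrite ltnS leq_addr.
rewrite (bigD1 (Ordinal iI)) //= addKn in e.
have rest : Q (\sum_(k < (i + j).+1 | k != Ordinal iI) p`_k * q`_(i + j - k)).
  apply: QsumQ => k hk.
  case: (ltngtP k i) => hki.
  - rewrite mulrC; apply: QM => //; exact: NNPP (mi _ hki).
  - apply: QM => //; apply: NNPP; apply: mj.
    move: hki (ltn_ord k); case: k {hk} => k' /= h1 h2; lia.
  - by move: hk; rewrite -(inj_eq val_inj) /= hki eqxx.
have : Q (p`_i * q`_j).
  have -> : p`_i * q`_j = (p`_i * q`_j + \sum_(k < (i + j).+1 | k != Ordinal iI) p`_k * q`_(i + j - k))
     + (- 1) * \sum_(k < (i + j).+1 | k != Ordinal iI) p`_k * q`_(i + j - k) by ring.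
  by apply: QD => //; apply: QM => //; apply: RN.
by case/Qp => //.
Qed.

Lemma QX_mulr (p q : {poly K}) : (forall i, Q p`_i) -> inRX R q -> forall i, Q (p * q)`_i.
Proof. by move=> hp hq i; rewrite coefM; apply: QsumQ => k _; rewrite mulrC; apply: QM. Qed.

Lemma QX_mull (p q : {poly K}) : inRX R p -> (forall i, Q q`_i) -> forall i, Q (p * q)`_i.
Proof. by move=> hp hq i; rewrite coefM; apply: QsumQ => k _; apply: QM. Qed.

End QX.

Section GA.
Variables (G : nmodType) (K : fieldType) (R : pred K) (Rg : G -> pred K).
Hypothesis HG : grading_monoid G.
Hypothesis HR : graded_domain R Rg.
Variable st : (K -> Prop) -> (K -> Prop).
Hypothesis Hst : semistar R st.

Local Notation Rs := (Rset R).
Local Notation comp := (comp HR).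
Local Notation supp := (supp HR).
Local Notation sf := (star_f R st).
Local Notation hclosed := (hclosed HR).
Local Notation qprime := (qprime HR st).

Lemma inRX_mul (p q : {poly K}) : inRX R p -> inRX R q -> inRX R (p * q).
Proof.
move=> hp hq i; apply: (@QX_mulr K R (fun x => R x)) => //.
- exact: (R0 HR).
- by move=> x y; apply: (RD HR).
- by move=> r x; apply: (RM HR).
Qed.

Lemma inRX1 : inRX R 1.
Proof. by move=> i; rewrite coef1; case: (i == 0)%N; [exact: (R1 HR) | exact: (R0 HR)]. Qed.

Lemma inRXC c : R c -> inRX R c%:P.
Proof. by move=> hc i; rewrite coefC; case: (i == 0)%N => //; exact: (R0 HR). Qed.

Lemma inRXX n : inRX R 'X^n.
Proof. by move=> i; rewrite coefXn; case: (i == n)%N; [exact: (R1 HR) | exact: (R0 HR)]. Qed.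

Definition Agens (g : {poly K}) := [seq comp g`_i a | i <- iota 0 (size g), a <- supp g`_i].

Lemma Agens_hom g y : inRX R g -> y \in Agens g -> R y /\ hom Rg y.
Proof.
move=> hg /allpairsPdep [i [a [_ _ ->]]].
case: (comp_spec HR (hg i)) => _ hc _ _; split; [exact: (RgR HR (hc a)) | by exists a].
Qed.

Lemma Af_eq g : inRX R g -> Af R Rg g = span Rs (fun y => y \in Agens g).
Proof.
move=> hg; apply: functional_extensionality => x; apply: propositional_extensionality; split.
  apply: span_sub.
  - exact: span_nil.
  - by move=> u v; apply: span_add.
  - move=> r y hr [i [s [c [us hc e [a ha ->]]]]].
    apply: (span_scale (RsM HR)) => //.
    have ec := comp_uniq HR us hc e a; rewrite ha in ec; rewrite -ec.
    case: (eqVneq (comp g`_i a) 0) => [->|nz]; first exact: span_nil.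
    apply: span_in; first exact: (Rs1 HR).
    apply/allpairsPdep; exists i, a; split => //.
      rewrite mem_iota /= add0n; apply: NNPP => /negP; rewrite -leqNgt => hi.
      by move: nz; rewrite nth_default // (comp0 HR) eqxx.
    apply: NNPP => /negP hn; move: nz; case: (comp_spec HR (hg i)) => _ _ _ ->//.
    by rewrite eqxx.
apply: span_mono => y /allpairsPdep [i [a [_ ha ->]]].
exists i; exists (supp g`_i), (comp g`_i).
case: (comp_spec HR (hg i)) => us hc e _; split => //; by exists a.

Qed.

Lemma Af_ideal g : inRX R g -> ideal R (Af R Rg g).
Proof. move=> hg; rewrite Af_eq //; apply: (ideal_span HR) => y; by case/(Agens_hom hg). Qed.

Lemma Af_hclosed g : inRX R g -> hclosed (Af R Rg g).
Proof. move=> hg; rewrite Af_eq //; apply: (hclosed_span HR) => y; exact: (Agens_hom hg). Qed.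

Lemma Af_comp g i a : inRX R g -> Af R Rg g (comp g`_i a).
Proof.
move=> hg; rewrite Af_eq //.
case: (eqVneq (comp g`_i a) 0) => [->|nz]; first exact: span_nil.
apply: span_in; first exact: (Rs1 HR).
apply/allpairsPdep; exists i, a; split => //.
  rewrite mem_iota /= add0n; apply: NNPP => /negP; rewrite -leqNgt => hi.
  by move: nz; rewrite nth_default // (comp0 HR) eqxx.
apply: NNPP => /negP hn; move: nz; case: (comp_spec HR (hg i)) => _ _ _ ->//.
by rewrite eqxx.
Qed.

Lemma Af_coef g i : inRX R g -> Af R Rg g g`_i.
Proof.
move=> hg; case: (comp_spec HR (hg i)) => _ _ e _; rewrite e.
have [_ [h0 [hD _]]] := Af_ideal hg.
elim: (supp g`_i) => [|a l IH]; first by rewrite big_nil.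
by rewrite big_cons; apply: hD => //; apply: Af_comp.
Qed.

Lemma Af_sub (Q : K -> Prop) g : inRX R g -> ideal R Q -> hclosed Q ->
  (forall i, Q g`_i) -> incl (Af R Rg g) Q.
Proof.
move=> hg [QR [Q0 [QD QM]]] hQ hgi; rewrite Af_eq // => x; apply: span_sub => //.
move=> r y hr /allpairsPdep [i [a [_ _ ->]]]; apply: QM => //; exact: hQ.
Qed.

Lemma Agens_nz g : inRX R g -> g != 0 -> exists y, y != 0 /\ y \in Agens g.
Proof.
move=> hg g0.
have [i hi] : exists i, g`_i != 0 by exists (size g).-1; rewrite -lead_coefE lead_coef_eq0.
case: (comp_spec HR (hg i)) => _ _ e h0.
have [a ha] : exists a, comp g`_i a != 0.
  apply: NNPP => hn; move: hi; rewrite e big1 ?eqxx // => a _.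
  by apply: NNPP => h'; apply: hn; exists a; apply/eqP.
exists (comp g`_i a); split => //.
apply/allpairsPdep; exists i, a; split => //.
  rewrite mem_iota /= add0n; apply: NNPP => /negP; rewrite -leqNgt => hs.
  by move: hi; rewrite nth_default // eqxx.
by apply: NNPP => /negP hn; move: ha; rewrite h0 // eqxx.
Qed.

Lemma Af_nz g : inRX R g -> g != 0 -> nz_submod Rs (Af R Rg g).
Proof.
move=> hg g0; rewrite Af_eq //; apply: (span_nzR HR).
case: (Agens_nz hg g0) => y [y0 hy]; exists y; split => //; apply: span_in => //; exact: (Rs1 HR).
Qed.

Lemma Af_sf g : inRX R g -> g != 0 -> st (Af R Rg g) 1 -> sf (Af R Rg g) 1.
Proof.
move=> hg g0 h; exists (Agens g); rewrite -Af_eq //; split => //.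
by case: (Af_nz hg g0).
Qed.

Lemma Nstar_notQ g Q : Nstar R Rg st g -> qprime Q -> ~ (forall i, Q g`_i).
Proof.
move=> [g0 hg hs] [iQ [hQ [_ nQ]]] hgi; apply: nQ.
apply: (sf_mono (Af_sub hg iQ hQ hgi)); apply: Af_sf => //.
by apply/hs; apply: (st_Rs1 HR Hst).
Qed.

Lemma Nstar_of g : g != 0 -> inRX R g ->
  (forall Q, qprime Q -> ~ (forall i, Q g`_i)) -> Nstar R Rg st g.
Proof.
move=> g0 hg hQ; split => //.
case: (classic (sf (Af R Rg g) 1)) => h.
  apply: (st_one HR Hst (Af_nz hg g0)); first by case: (Af_ideal hg).
  case: h => s [h1 h2 h3]; exact: (st_mono Hst (span_nzR HR h2) (Af_nz hg g0) h1 h3).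
case: (exists_qprime HG Hst (Af_ideal hg) (Af_hclosed hg) h) => Q [qQ IQ].
by case: (hQ Q qQ) => i; apply: IQ; apply: Af_coef.
Qed.

End GA.

Section NAs.
Variables (G : nmodType) (K : fieldType) (R : pred K) (Rg : G -> pred K).
Hypothesis HG : grading_monoid G.
Hypothesis HR : graded_domain R Rg.
Variable st : (K -> Prop) -> (K -> Prop).
Hypothesis Hst : semistar R st.

Local Notation Rs := (Rset R).
Local Notation comp := (comp HR).
Local Notation supp := (supp HR).
Local Notation sf := (star_f R st).
Local Notation hclosed := (hclosed HR).
Local Notation qprime := (qprime HR st).
Local Notation N := (Nstar R Rg st).
Local Notation NA := (NA R Rg st).
Local Notation FF := {fraction {poly K}}.

Lemma tof_neq0 (g : {poly K}) : g != 0 -> g%:F != 0 :> FF.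
Proof. by rewrite tofrac_eq0. Qed.

Lemma tofI (p q : {poly K}) : p%:F = q%:F :> FF -> p = q.
Proof. by move/eqP; rewrite tofrac_eq => /eqP. Qed.

Lemma frac_eq (p g p' g' : {poly K}) : g != 0 -> g' != 0 ->
  p%:F / g%:F = p'%:F / g'%:F :> FF -> p * g' = p' * g.
Proof.
move=> g0 g'0 e; apply: tofI; rewrite !tofracM.
have h0 := tof_neq0 g0; have h0' := tof_neq0 g'0.
move: (congr1 (fun z => z * g%:F * g'%:F) e) => /= e3.
rewrite (divfK h0) [_ / g'%:F * _ * _]mulrAC (divfK h0') in e3; exact: e3.
Qed.

Lemma Q1_sf (Q : K -> Prop) : ideal R Q -> Q 1 -> sf Q 1.
Proof.
move=> [QR [Q0 [QD QM]]] Q1; exists [:: 1]; split.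
- move=> x; apply: span_sub => // r y hr; rewrite inE => /eqP ->; exact: QM.
- exists 1; rewrite oner_eq0; split => //; apply: span_in; [exact: (Rs1 HR) | exact: mem_head].
- apply: (st_ext Hst); last by apply: span_in; [exact: (Rs1 HR) | exact: mem_head].
  apply: (span_nzR HR); exists 1; rewrite oner_eq0; split => //; apply: span_in; [exact: (Rs1 HR) | exact: mem_head].
Qed.

Lemma qprime_not1 Q : qprime Q -> ~ Q 1.
Proof. by move=> [iQ [_ [_ nQ]]] Q1; apply: nQ; apply: Q1_sf. Qed.

Lemma N1 : N 1.
Proof.
apply: (Nstar_of HG Hst) => //; first exact: oner_neq0.
  exact: (inRX1 HR).
move=> Q qQ h; apply: (qprime_not1 qQ); have := h 0%N; by rewrite coef1.
Qed.

Lemma NM g h : N g -> N h -> N (g * h).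
Proof.
move=> Ng Nh; have [g0 hg _] := Ng; have [h0 hh _] := Nh.
apply: (Nstar_of HG Hst); first by rewrite mulf_neq0.
  exact: (inRX_mul HR).
move=> Q qQ; have [[QR [Q0 [QD QM]]] [_ [Qp _]]] := qQ.
apply: (QX_prime Q0 QD QM Qp (RN HR) (R1 HR) hg hh); [exact: (Nstar_notQ Hst Ng qQ) | exact: (Nstar_notQ Hst Nh qQ)].
Qed.

Lemma N_nz g : N g -> g != 0. Proof. by case. Qed.
Lemma N_RX g : N g -> inRX R g. Proof. by case. Qed.

Lemma NA_poly p : inRX R p -> NA p%:F.
Proof. by move=> hp; exists p, 1; split => //; [exact: N1 | rewrite tofrac1 divr1]. Qed.

Lemma NA1 : NA 1. Proof. by rewrite -tofrac1; apply: NA_poly; apply: (inRX1 HR). Qed.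
Lemma NA0 : NA 0. Proof. by rewrite -tofrac0; apply: NA_poly => i; rewrite coef0; apply: (R0 HR). Qed.

Lemma frac_add (p g p' g' : {poly K}) : g != 0 -> g' != 0 ->
  p%:F / g%:F + p'%:F / g'%:F = (p * g' + p' * g)%:F / (g * g')%:F :> FF.
Proof.
move=> g0 g'0; have h0 := tof_neq0 g0; have h0' := tof_neq0 g'0.
rewrite tofracD !tofracM invfM mulrDl.
congr (_ + _).
  by rewrite mulrA mulrAC -(mulrA _ g'%:F) (divff h0') mulr1.
by rewrite mulrA -(mulrA _ g%:F) (divff h0) mulr1.
Qed.

Lemma frac_mul (p g p' g' : {poly K}) :
  (p%:F / g%:F) * (p'%:F / g'%:F) = (p * p')%:F / (g * g')%:F :> FF.
Proof. by rewrite !tofracM invfM mulrACA. Qed.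

Lemma NA_add x y : NA x -> NA y -> NA (x + y).
Proof.
move=> [p [g [hp Ng ->]]] [p' [g' [hp' Ng' ->]]].
exists (p * g' + p' * g), (g * g'); split.
- by move=> i; rewrite coefD; apply: (RD HR); apply: (inRX_mul HR) => //; apply: N_RX.
- exact: NM.
- by rewrite frac_add //; apply: N_nz.
Qed.

Lemma NA_mul x y : NA x -> NA y -> NA (x * y).
Proof.
move=> [p [g [hp Ng ->]]] [p' [g' [hp' Ng' ->]]].
exists (p * p'), (g * g'); split; [exact: (inRX_mul HR) | exact: NM | exact: frac_mul].
Qed.

Lemma NA_const a : R a -> NA (a%:P)%:F.
Proof. by move=> ha; apply: NA_poly; apply: (inRXC HR). Qed.

Lemma NA_sub (E : FF -> Prop) : E 0 -> (forall x y, E x -> E y -> E (x + y)) ->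
  (forall r x, NA r -> E x -> E (r * x)) ->
  forall (T : FF -> Prop) x, (forall y, T y -> E y) -> span NA T x -> E x.
Proof.
move=> h0 hD hM T x hT; apply: span_sub => // r y hr /hT; exact: hM.
Qed.

Lemma mulmod_NA (I : FF -> Prop) x : mulmod NA I (colon NA I) x -> NA x.
Proof.
apply: span_sub; [exact: NA0 | exact: NA_add|].
move=> r z hr [u [v [hu [hv ->]]]]; apply: NA_mul => //; rewrite mulrC; exact: hv.
Qed.

Lemma three_two (f : {poly K}) (A : K -> Prop) : f != 0 ->
  sameset (extNA R Rg st A) (fNA R Rg st f) -> invertible NA (extNA R Rg st A).
Proof.
move=> f0 e x; split; first exact: mulmod_NA.
move=> hx.
have fI : extNA R Rg st A f%:F by apply/e; exists 1; rewrite mulr1; split => //; exact: NA1.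
have fC : colon NA (extNA R Rg st A) (f%:F)^-1.
  move=> y /e [w [hw ->]]; by rewrite mulrA mulVf ?mul1r // tof_neq0.
have -> : x = x * (f%:F * (f%:F)^-1) by rewrite divff ?mulr1 // tof_neq0.
apply: (span_scale NA_mul) => //; apply: span_in; first exact: NA1.
by exists f%:F, (f%:F)^-1.
Qed.

End NAs.

Section Main.
Variables (G : nmodType) (K : fieldType) (R : pred K) (Rg : G -> pred K).
Hypothesis HG : grading_monoid G.
Hypothesis HR : graded_domain R Rg.
Variable st : (K -> Prop) -> (K -> Prop).
Hypothesis Hst : semistar R st.
Variable f : {poly K}.
Hypothesis f0 : f != 0.
Hypothesis fR : inRX R f.

Local Notation Rs := (Rset R).
Local Notation comp := (comp HR).
Local Notation supp := (supp HR).
Local Notation sf := (star_f R st).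
Local Notation hclosed := (hclosed HR).
Local Notation qprime := (qprime HR st).
Local Notation N := (Nstar R Rg st).
Local Notation NA := (NA R Rg st).
Local Notation FF := {fraction {poly K}}.
Local Notation A := (Af R Rg f).
Local Notation gens := (Agens HR f).
Local Notation J := (mulmod Rs A (colon Rs A)).
Local Notation I := (extNA R Rg st A).

Lemma gens_hom e : e \in gens -> R e /\ hom Rg e.
Proof. exact: (Agens_hom fR). Qed.

Lemma A_span : A = span Rs (fun y => y \in gens).
Proof. exact: (Af_eq HR fR). Qed.

Lemma A_gen e : e \in gens -> A e.
Proof. by move=> he; rewrite A_span; apply: span_in => //; exact: (Rs1 HR). Qed.

Lemma colon_of_gens x : (forall e, e \in gens -> R (x * e)) -> colon Rs A x.
Proof.
move=> h y; rewrite A_span; move: y; apply: span_sub.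
- by rewrite mulr0; exact: (R0 HR).
- by move=> u v hu hv; rewrite mulrDr; apply: (RD HR).
- by move=> r e hr he; rewrite mulrCA; apply: (RM HR) => //; apply: h.
Qed.

Lemma J_R x : J x -> R x.
Proof.
move: x; apply: (@span_sub _ Rs _ (fun x => R x)).
- exact: (R0 HR).
- by move=> u v; apply: (RD HR).
- move=> r z hr [a [b [ha [hb ->]]]]; apply: (RM HR) => //.
  rewrite mulrC; exact: hb.
Qed.

Section QV.
Variable Q : K -> Prop.
Hypothesis qQ : qprime Q.

Definition V (z : FF) := exists p g, [/\ inRX R p, (forall i, Q p`_i), N g & z = p%:F / g%:F].

Lemma QQ0 : Q 0. Proof. by case: qQ => [[_ [h _]] _]. Qed.
Lemma QQD x y : Q x -> Q y -> Q (x + y). Proof. by case: qQ => [[_ [_ [h _]]] _]; apply: h. Qed.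
Lemma QQM r x : R r -> Q x -> Q (r * x). Proof. by case: qQ => [[_ [_ [_ h]]] _]; apply: h. Qed.
Lemma QQR x : Q x -> R x. Proof. by case: qQ => [[h _] _]; apply: h. Qed.
Lemma QQp x y : R x -> R y -> Q (x * y) -> Q x \/ Q y. Proof. by case: qQ => _ [_ [h _]]; apply: h. Qed.
Lemma QQh x a : Q x -> Q (comp x a). Proof. by case: qQ => _ [h _]; apply: h. Qed.

Lemma V0 : V 0.
Proof.
exists 0, 1; split.
- by move=> i; rewrite coef0; exact: (R0 HR).
- by move=> i; rewrite coef0; exact: QQ0.
- exact: (N1 HG HR Hst).
- by rewrite tofrac0 mul0r.
Qed.

Lemma V_add x y : V x -> V y -> V (x + y).
Proof.
move=> [p [g [hp qp Ng ->]]] [p' [g' [hp' qp' Ng' ->]]].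
have g0 := N_nz Ng; have g'0 := N_nz Ng'.
exists (p * g' + p' * g), (g * g'); split.
- by move=> i; rewrite coefD; apply: (RD HR); apply: (inRX_mul HR) => //; [exact: (N_RX Ng') | exact: (N_RX Ng)].
- move=> i; rewrite coefD; apply: QQD.
    by apply: (QX_mulr QQ0 QQD QQM) => //; exact: (N_RX Ng').
  by apply: (QX_mulr QQ0 QQD QQM) => //; exact: (N_RX Ng).
- exact: (NM HG HR Hst).
- exact: frac_add.
Qed.

Lemma V_mul r x : NA r -> V x -> V (r * x).
Proof.
move=> [p0 [g0 [hp0 Ng0 ->]]] [p [g [hp qp Ng ->]]].
exists (p0 * p), (g0 * g); split.
- exact: (inRX_mul HR).
- exact: (QX_mull QQ0 QQD QQM).
- exact: (NM HG HR Hst).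
- exact: frac_mul.
Qed.

Lemma notV1 : ~ V 1.
Proof.
move=> [p [g [hp qp Ng e]]].
have g0 := N_nz Ng.
have : p%:F = g%:F :> FF.
  by apply: (mulIf (invr_neq0 (tof_neq0 g0))); rewrite -e divff // tof_neq0.
move/tofI => epg; apply: (Nstar_notQ Hst Ng qQ) => i; rewrite -epg; exact: qp.
Qed.

End QV.

Lemma two_one : invertible NA I -> star_f_invertible R st A.
Proof.
move=> H2; rewrite /star_f_invertible.
case: (classic (sf J 1)) => hJ; first exact: (sf_one HR Hst J_R hJ).
exfalso.
pose I0 := span Rs (fun y => J y /\ hom Rg y).
have iI0 : ideal R I0 by apply: (ideal_span HR) => y [/J_R].
have hI0 : hclosed I0 by apply: (hclosed_span HR) => y [/J_R].
have I0J : incl I0 J.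
  move=> x; apply: span_sub.
  - exact: span_nil.
  - by move=> u v; apply: span_add.
  - by move=> r y hr [hy _]; apply: (span_scale (RsM HR)).
have nI0 : ~ sf I0 1 by move=> h; apply: hJ; apply: (sf_mono I0J).
case: (exists_qprime HG Hst iI0 hI0 nI0) => Q [qQ IQ].
pose W (w : FF) := forall a, A a -> NA ((a%:P)%:F * w).
have [e [eg [w [Ww nV]]]] : exists e, e \in gens /\ exists w, W w /\ ~ V Q (e%:P%:F * w).
  apply: NNPP => hn.
  have hV : forall e w, e \in gens -> W w -> V Q (e%:P%:F * w).
    move=> e w eg Ww; apply: NNPP => nv; apply: hn; exists e; split => //; by exists w.
  have hA : forall a w, A a -> W w -> V Q (a%:P%:F * w).
    move=> a w + Ww; rewrite A_span; move: a.
    apply: (@span_sub _ Rs _ (fun a => V Q (a%:P%:F * w))).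
    - by rewrite polyC0 tofrac0 mul0r; apply: V0.
    - by move=> u v hu hv; rewrite polyCD tofracD mulrDl; apply: V_add.
    - move=> r e' hr he'; rewrite polyCM tofracM -mulrA; apply: V_mul => //.
        exact: (NA_const HG HR Hst hr).
      exact: hV.
  have hIc : forall y, colon NA I y -> W y.
    move=> y hy a ha; rewrite mulrC; apply: hy; apply: span_in; first exact: (NA1 HG HR Hst).
    by exists a.
  have hI : forall x y, I x -> colon NA I y -> V Q (x * y).
    move=> x y + hy; move: x.
    apply: (@span_sub _ NA _ (fun x => V Q (x * y))).
    - by rewrite mul0r; apply: V0.
    - by move=> u v hu hv; rewrite mulrDl; apply: V_add.
    - move=> r z hr [a ha ->]; rewrite -mulrA; apply: V_mul => //.
      by apply: hA => //; apply: hIc.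
  have hM : forall z, mulmod NA I (colon NA I) z -> V Q z.
    apply: (@span_sub _ NA _ (V Q)).
    - exact: V0.
    - by move=> u v; apply: V_add.
    - by move=> r z hr [x [y [hx [hy ->]]]]; apply: V_mul => //; apply: hI.
  by apply: (notV1 qQ); apply: hM; apply/H2; exact: (NA1 HG HR Hst).
have [Re [d hd]] := gens_hom eg.
have e0 : e != 0.
  apply/eqP => ez; apply: nV; rewrite ez polyC0 tofrac0 mul0r; exact: V0.
have [p [g [hp Ng ew]]] := Ww e (A_gen eg).
have npQ : ~ (forall i, Q p`_i).
  by move=> hq; apply: nV; exists p, g; split.
have key : forall e', e' \in gens -> exists t, [/\ R t, hom Rg t, ~ Q t & R (e' * t / e)].
  move=> e' e'g.
  have [Re' [d' hd']] := gens_hom e'g.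
  have [p' [g' [hp' Ng' ew']]] := Ww e' (A_gen e'g).
  have g0 := N_nz Ng; have g'0 := N_nz Ng'.
  have eq1 : (e'%:P * p) * g' = (e%:P * p') * g.
    apply: frac_eq => //.
    rewrite !tofracM -!mulrA -ew -ew' !mulrA.
    by rewrite [X in X * w](mulrC).
  have nP : ~ (forall i, Q (p * g')`_i).
    apply: (QX_prime (QQ0 qQ) (QQD qQ) (QQM qQ) (QQp qQ) (RN HR) (R1 HR) hp (N_RX Ng')) => //.
    exact: (Nstar_notQ Hst Ng' qQ).
  have [i ni] : exists i, ~ Q (p * g')`_i.
    by apply: NNPP => hn; apply: nP => i; apply: NNPP => h; apply: hn; exists i.
  have RP : R (p * g')`_i by apply: (inRX_mul HR) => //; exact: (N_RX Ng').
  have [a na] : exists a, ~ Q (comp (p * g')`_i a).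
    apply: NNPP => hn; apply: ni.
    case: (comp_spec HR RP) => _ _ -> _.
    rewrite -(big_filter _ predT); apply: QsumQ => //.
    - exact: (QQ0 qQ).
    - exact: (QQD qQ).
    - by move=> b _; apply: NNPP => h; apply: hn; exists b.
  have [_ hc _ _] := comp_spec HR RP.
  exists (comp (p * g')`_i a); split => //; first exact: (RgR HR (hc a)).
    by exists a.
  have e1 := comp_homM HG HR a hd' RP.
  have e2 : e' * (p * g')`_i = e * (p' * g)`_i.
    by rewrite -!coefCM !mulrA eq1.
  rewrite e2 in e1.
  have Rpg : R (p' * g)`_i by apply: (inRX_mul HR) => //; exact: (N_RX Ng).
  have [r [hr er]] := comp_homM_ex HR (d' + a) hd Rpg.
  rewrite er in e1.
  by rewrite -e1 mulrC mulrA mulVf // mul1r.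
have [T [RT homT nQT hT]] : exists T, [/\ R T, hom Rg T, ~ Q T &
    forall e', e' \in gens -> R (e' * T / e)].
  have : forall l : seq K, {subset l <= gens} -> exists T, [/\ R T, hom Rg T, ~ Q T &
      forall e', e' \in l -> R (e' * T / e)].
    elim => [|e1 l IH] hl.
      exists 1; split => //; [exact: (R1 HR) | exists 0; exact: (one_hom HG HR) | exact: (qprime_not1 Hst qQ)].
    have hl' : {subset l <= gens} by move=> z zl; apply: hl; rewrite inE zl orbT.
    have [T [RT homT nQT hT]] := IH hl'.
    have [t [Rt homt nQt ht]] := key e1 (hl e1 (mem_head _ _)).
    exists (t * T); split.
    - exact: (RM HR).
    - by case: homt => a1 h1; case: homT => a2 h2; exists (a1 + a2); apply: (RgM HR).
    - by case/(QQp qQ Rt RT).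
    - move=> e'; rewrite inE => /orP[/eqP ->|he'].
        have -> : e1 * (t * T) / e = (e1 * t / e) * T by ring.
        by apply: (RM HR).
      have -> : e' * (t * T) / e = t * (e' * T / e) by ring.
      by apply: (RM HR) => //; apply: hT.
  by move=> /(_ gens (fun z h => h)).
have cx : colon Rs A (T / e).
  by apply: colon_of_gens => e' he'; rewrite mulrC mulrA; apply: hT.
have JT : J T.
  apply: span_in; first exact: (Rs1 HR).
  exists e, (T / e); split; first exact: A_gen.
  by split => //; rewrite mulrC divfK.
apply: nQT; apply: IQ; apply: span_in; first exact: (Rs1 HR).
by split.
Qed.

End Main.

Section Main2.
Variables (G : nmodType) (K : fieldType) (R : pred K) (Rg : G -> pred K).
Hypothesis HG : grading_monoid G.
Hypothesis HR : graded_domain R Rg.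
Variable st : (K -> Prop) -> (K -> Prop).
Hypothesis Hst : semistar R st.
Variable f : {poly K}.
Hypothesis f0 : f != 0.
Hypothesis fR : inRX R f.

Local Notation Rs := (Rset R).
Local Notation comp := (comp HR).
Local Notation supp := (supp HR).
Local Notation sf := (star_f R st).
Local Notation hclosed := (hclosed HR).
Local Notation qprime := (qprime HR st).
Local Notation N := (Nstar R Rg st).
Local Notation NA := (NA R Rg st).
Local Notation FF := {fraction {poly K}}.
Local Notation A := (Af R Rg f).
Local Notation gens := (Agens HR f).
Local Notation J := (mulmod Rs A (colon Rs A)).
Local Notation I := (extNA R Rg st A).

Definition Tb (bs : seq K) (y : K) := exists a b, [/\ A a, b \in bs & y = a * b].

Lemma collect x : J x -> exists bs, (forall b, b \in bs -> colon Rs A b) /\ span Rs (Tb bs) x.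
Proof.
move: x; apply: (@span_sub _ Rs _ (fun x => exists bs, (forall b, b \in bs -> colon Rs A b) /\ span Rs (Tb bs) x)).
- by exists [::]; split => //; apply: span_nil.
- move=> u v [bs [h1 h2]] [bs' [h1' h2']]; exists (bs ++ bs'); split.
    by move=> b; rewrite mem_cat => /orP[/h1|/h1'].
  apply: span_add.
    by apply: span_mono h2 => y [a [b [ha hb ->]]]; exists a, b; rewrite mem_cat hb.
  by apply: span_mono h2' => y [a [b [ha hb ->]]]; exists a, b; rewrite mem_cat hb orbT.
- move=> r z hr [a [b [ha [hb ->]]]]; exists [:: b]; split.
    by move=> b'; rewrite inE => /eqP ->.
  apply: (span_scale (RsM HR)) => //; apply: span_in; first exact: (Rs1 HR).
  by exists a, b; rewrite inE eqxx.
Qed.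

Lemma collect_seq (s : seq K) : (forall x, x \in s -> J x) ->
  exists bs, (forall b, b \in bs -> colon Rs A b) /\ forall x, x \in s -> span Rs (Tb bs) x.
Proof.
elim: s => [|x s IH] hs; first by exists [::].
have [bs [h1 h2]] : exists bs, (forall b, b \in bs -> colon Rs A b) /\ forall x, x \in s -> span Rs (Tb bs) x.
  by apply: IH => y ys; apply: hs; rewrite inE ys orbT.
have [bs' [h1' h2']] := collect (hs x (mem_head _ _)).
exists (bs ++ bs'); split.
  by move=> b; rewrite mem_cat => /orP[/h1|/h1'].
move=> y; rewrite inE => /orP[/eqP ->|ys].
  by apply: span_mono h2' => z [a [b [ha hb ->]]]; exists a, b; rewrite mem_cat hb orbT.
by apply: span_mono (h2 _ ys) => z [a [b [ha hb ->]]]; exists a, b; rewrite mem_cat hb.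
Qed.


Section Pieces.
Variable e0 : K.
Hypothesis e0g : e0 \in gens.
Hypothesis e00 : e0 != 0.

Definition pieces b := [seq comp (b * e0) c / e0 | c <- supp (b * e0)].

Lemma Rbe0 b : colon Rs A b -> R (b * e0).
Proof. by move=> hb; apply: hb; apply: (A_gen fR). Qed.

Lemma pieces_sum b : colon Rs A b -> b = \sum_(b' <- pieces b) b'.
Proof.
move=> hb; rewrite big_map -mulr_suml.
case: (comp_spec HR (Rbe0 hb)) => _ _ <- _.
by rewrite mulfK.
Qed.

Lemma pieces_prop b b' : colon Rs A b -> b' \in pieces b ->
  colon Rs A b' /\ forall e', e' \in gens -> R (e' * b') /\ hom Rg (e' * b').
Proof.
move=> hb /mapP [c _ ->].
have Rc := Rbe0 hb.
have [_ hcc _ _] := comp_spec HR Rc.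
have [_ [d0 hd0]] := gens_hom fR e0g.
have key : forall e', e' \in gens -> R (e' * (comp (b * e0) c / e0)) /\ hom Rg (e' * (comp (b * e0) c / e0)).
  move=> e' he'; have [Re' [d' hd']] := gens_hom fR he'.
  have e1 := comp_homM HG HR c hd' Rc.
  have Reb : R (e' * b) by rewrite mulrC; apply: hb; apply: (A_gen fR).
  have [r [Rr er]] := comp_homM_ex HR (d' + c) hd0 Reb.
  have ee : e' * (b * e0) = e0 * (e' * b) by ring.
  rewrite ee er in e1.
  have -> : e' * (comp (b * e0) c / e0) = r.
    by rewrite mulrA -e1 mulrC mulrA mulVf // mul1r.
  split => //; apply: (hom_div HG HR hd0 e00 Rr (c := d' + c)).
  rewrite e1; exact: (RgM HR hd' (hcc c)).
split; last exact: key.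
by apply: (colon_of_gens fR) => e' he'; rewrite mulrC; case: (key e' he').
Qed.

End Pieces.

Lemma one_three : star_f_invertible R st A -> sameset I (fNA R Rg st f).
Proof.
move=> H1.
have hJ : sf J 1 := sf_of_one HR Hst H1.
case: hJ => s [sJ [y0 [ny0 hy0]] h1F].
have sJ' : forall x, x \in s -> J x.
  by move=> x xs; apply: sJ; apply: span_in => //; exact: (Rs1 HR).
have [bs [hbs hsb]] := collect_seq sJ'.
have [e0 [e00 e0g]] := Agens_nz HR fR f0.
pose bs' := flatten [seq pieces e0 b | b <- bs].
have hbs' : forall b', b' \in bs' -> exists2 b, b \in bs & b' \in pieces e0 b.
  by move=> b' /flattenP [l /mapP [b hb ->] hb']; exists b.
have cbs' : forall b', b' \in bs' -> colon Rs A b'.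
  by move=> b' /hbs' [b hb hb']; case: (pieces_prop e0g e00 (hbs _ hb) hb').
pose h := \poly_(k < size bs') bs'`_k.
have hk : forall k, colon Rs A h`_k.
  move=> k; rewrite coef_poly; case: ifP => hk.
    by apply: cbs'; apply: mem_nth.
  by move=> y _; rewrite mul0r; exact: (R0 HR).
have inRfh : inRX R (f * h).
  move=> k; rewrite coefM; apply: (Rsum HR) => j _; rewrite mulrC; apply: hk; exact: (Af_coef HR).
have inRah : forall a, A a -> inRX R (a%:P * h).
  by move=> a ha k; rewrite coefCM mulrC; apply: hk.
have h0 : h != 0.
  apply/eqP => hz.
  have z' : forall b', b' \in bs' -> b' = 0.
    move=> b' hb'; have := congr1 (fun p : {poly K} => p`_(index b' bs')) hz.
    by rewrite coef_poly index_mem hb' nth_index // coef0.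
  have zb : forall b, b \in bs -> b = 0.
    move=> b hb; rewrite (pieces_sum e0g e00 (hbs _ hb)) big1_seq // => b' /andP [_ hb'].
    apply: z'; apply/flattenP; exists (pieces e0 b) => //; exact: map_f.
  have zT : forall x, span Rs (Tb bs) x -> x = 0.
    apply: (@span_sub _ Rs _ (fun x => x = 0)) => //.
    - by move=> u v -> ->; rewrite addr0.
    - by move=> r z _ [a [b [_ hb ->]]]; rewrite (zb _ hb) !mulr0.
  have zs : forall x, span Rs (fun y => y \in s) x -> x = 0.
    apply: (@span_sub _ Rs _ (fun x => x = 0)) => //.
    - by move=> u v -> ->; rewrite addr0.
    - by move=> r z _ zs; rewrite (zT _ (hsb _ zs)) mulr0.
  by move: ny0; rewrite (zs _ hy0) eqxx.
have Nfh : N (f * h).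
  apply: (Nstar_of HG Hst); [by rewrite mulf_neq0 | exact: inRfh|].
  move=> Q qQ Hq.
  have [x [xs nQx]] : exists x, x \in s /\ ~ Q x.
    apply: NNPP => hn; case: (qQ) => [[QR [Q0 [QD QM]]] [_ [_ nQ]]]; apply: nQ.
    exists s; split; [|by exists y0 | exact: h1F].
    move=> z; apply: span_sub => // r y hr ys; apply: QM => //.
    by apply: NNPP => nq; apply: hn; exists y.
  have [a [b [ha hb nQab]]] : exists a b, [/\ A a, b \in bs & ~ Q (a * b)].
    apply: NNPP => hn; apply: nQx; move: (hsb _ xs); apply: (@span_sub _ Rs _ Q).
    - exact: (QQ0 qQ).
    - exact: (QQD qQ).
    - move=> r z hr [a [b [ha hb ->]]]; apply: (QQM qQ) => //.
      by apply: NNPP => nq; apply: hn; exists a, b.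
  have cb := hbs _ hb.
  have [e [eg nQeb]] : exists e, e \in gens /\ ~ Q (e * b).
    apply: NNPP => hn; apply: nQab; move: ha; rewrite (A_span HR fR); move: a.
    apply: (@span_sub _ Rs _ (fun a => Q (a * b))).
    - by rewrite mul0r; exact: (QQ0 qQ).
    - by move=> u v hu hv; rewrite mulrDl; apply: (QQD qQ).
    - move=> r z hr zg; rewrite -mulrA; apply: (QQM qQ) => //.
      by apply: NNPP => nq; apply: hn; exists z.
  have [b' [hb' nQt]] : exists b', b' \in pieces e0 b /\ ~ Q (e * b').
    apply: NNPP => hn; apply: nQeb; rewrite (pieces_sum e0g e00 cb) mulr_sumr big_seq.
    apply: (QsumQ (QQ0 qQ) (QQD qQ)) => b2 hb2.
    by apply: NNPP => nq; apply: hn; exists b2.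
  have [cb' hcb'] := pieces_prop e0g e00 cb hb'.
  have [Rt [dl hdl]] := hcb' e eg.
  have hb'bs' : b' \in bs' by apply/flattenP; exists (pieces e0 b) => //; exact: map_f.
  have [i [al [_ _ ei]]] : exists i al, [/\ i \in iota 0 (size f), al \in supp f`_i & e = comp f`_i al].
    exact/allpairsPdep.
  have e0' : e != 0.
    by apply/eqP => ez; apply: nQt; rewrite ez mul0r; exact: (QQ0 qQ).
  have inRf'' : inRX R (b' *: f).
    by move=> k; rewrite coefZ; apply: cb'; exact: (Af_coef HR).
  have nQf'' : ~ (forall k, Q (b' *: f)`_k).
    move=> hq; apply: nQt.
    have e1 := comp_homM HG HR al hdl (fR i).
    have e2 : (e * b') * f`_i = e * (b' *: f)`_i by rewrite coefZ mulrA.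
    have he : Rg al e by rewrite ei; case: (comp_spec HR (fR i)).
    have e3 := comp_homM HG HR dl he (inRf'' i).
    rewrite e2 addrC e3 -ei in e1.
    have : comp (b' *: f)`_i dl = e * b' by apply: (mulfI e0'); rewrite e1 mulrC.
    move <-; apply: (QQh qQ); exact: hq.
  have nQeh : ~ (forall k, Q (e%:P * h)`_k).
    move=> hq; apply: nQt; have := hq (index b' bs').
    by rewrite coefCM coef_poly index_mem hb'bs' nth_index.
  have Qprod : forall k, Q ((b' *: f) * (e%:P * h))`_k.
    have -> : (b' *: f) * (e%:P * h) = (e * b')%:P * (f * h).
      by rewrite -mul_polyC polyCM; ring.
    apply: (QX_mull (QQ0 qQ) (QQD qQ) (QQM qQ)) => //; exact: (inRXC HR Rt).
  exact: (QX_prime (QQ0 qQ) (QQD qQ) (QQM qQ) (QQp qQ) (RN HR) (R1 HR) inRf'' (inRah e (A_gen fR eg)) nQf'' nQeh Qprod).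
have fF0 := tof_neq0 f0; have hF0 := tof_neq0 h0.
have hA : forall a, A a -> exists2 w, NA w & (a%:P)%:F = f%:F * w.
  move=> a ha; exists ((a%:P * h)%:F / (f * h)%:F).
    by exists (a%:P * h), (f * h); split => //; exact: inRah.
  rewrite !tofracM mulrA (mulrCA f%:F) (mulfK (mulf_neq0 fF0 hF0)).
  by [].
move=> z; split.
  move: z; apply: (@span_sub _ NA _ (fNA R Rg st f)).
  - by exists 0; split; [exact: (NA0 HG HR Hst) | rewrite mulr0].
  - move=> u v [w1 [hw1 ->]] [w2 [hw2 ->]]; exists (w1 + w2); split; last by rewrite mulrDr.
    exact: (NA_add HG HR Hst).
  - move=> r z0 hr [a ha ->]; have [w hw ->] := hA a ha.
    exists (r * w); split; last by rewrite mulrCA.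
    exact: (NA_mul HG HR Hst).
move=> [n [hn ->]].
have ef : f = \sum_(i < size f) (f`_i)%:P * 'X^i.
  by rewrite -{1}[f]coefK poly_def; apply: eq_bigr => i _; rewrite mul_polyC.
have -> : f%:F = \sum_(i < size f) ((f`_i)%:P)%:F * ('X^i)%:F :> FF.
  by rewrite {1}ef rmorph_sum; apply: eq_bigr => i _; rewrite rmorphM.
rewrite mulr_suml.
apply: span_sum => i.
rewrite -mulrA mulrC.
apply: (span_scale (NA_mul HG HR Hst)).
  apply: (NA_mul HG HR Hst) => //; apply: (NA_poly HG HR Hst); exact: (inRXX HR).
apply: span_in; first exact: (NA1 HG HR Hst).
exists f`_i => //; exact: (Af_coef HR).
Qed.

End Main2.

End Helpers.
Import Helpers.

Theorem corollary2p6 (G : nmodType) (K : fieldType) (R : pred K)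
  (Rg : G -> pred K) (st : (K -> Prop) -> (K -> Prop)) (f : {poly K}) :
  grading_monoid G ->
  graded_domain R Rg ->
  semistar R st ->
  (* R^star is properly contained in R_H *)
  incl (st (Rset R)) (RH R Rg) ->
  (exists x, RH R Rg x /\ ~ st (Rset R) x) ->
  f != 0 -> inRX R f ->
  (star_f_invertible R st (Af R Rg f) <->
     invertible (NA R Rg st) (extNA R Rg st (Af R Rg f))) /\
  (invertible (NA R Rg st) (extNA R Rg st (Af R Rg f)) <->
     sameset (extNA R Rg st (Af R Rg f)) (fNA R Rg st f)).
Proof.
move=> HG HR Hst _ _ f0 fR.
have h13 := one_three HG HR Hst f0 fR.
have h32 := three_two HG HR Hst f0 (A := Af R Rg f).
have h21 := two_one HG HR Hst fR.
split; split.
- by move=> h; apply: h32; apply: h13.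
- exact: h21.
- by move=> h; apply: h13; apply: h21.
- exact: h32.
Qed.
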